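(* Let $\psi$ satisfy Assumption $(\mathrm{A}_\ell)$ for some $\ell\ge 0$, and let $(\eta,v)$ with $\eta\in\mathcal C^1([0,\infty);\mathcal C(\overline\Omega_0))$, $v$ continuous, be a solution of the Lagrangian system (L) with initial history $v_s\in\mathcal C([-\tau,0]\times\overline\Omega_0)$ (compatible with $\eta$ as described in the context). Assume $R_V<+\infty$ and the flocking condition \[ d_V(0)+\int_{-\tau}^0 d_V(s)\,ds<\int_{d_X(-\tau)+R_V\tau}^\infty\widetilde\psi(s)\,ds . \] Then $\sup_{t\ge0}d_X(t)<+\infty$, and there is a constant $C>0$ independent of time such that \[ d_V(t)\le\Big(\max_{s\in[-\tau,0]}d_V(s)\Big)e^{-Ct}\qquad\text{for all }t\ge0. \]
   Context: Let $d\in\mathbb N$, $\tau\ge0$, $\Omega_0\subset\mathbb R^d$ a bounded open set, $\rho_0:\Omega_0\to[0,\infty)$ integrable with $\int_{\Omega_0}\rho_0=1$. Assumption $(\mathrm{A}_\ell)$: $\psi:\mathbb R^d\to(0,\infty)$ is continuous, $\psi(x)=\widetilde\psi(|x|)$ with $\widetilde\psi:[0,\infty)\to(0,\infty)$ nonincreasing, positive, bounded, $\widetilde\psi(0)=1$; if $\ell\ge1$, $\psi$ is $\mathcal C^\ell$ with uniformly bounded derivatives up to order $\ell$. Lagrangian system (L): for $x\in\Omega_0$, $t>0$: $\frac{d\eta_t(x)}{dt}=v_t(x)$, $\frac{dv_t(x)}{dt}=\frac{\int_{\Omega_0}\psi(\eta_t(x)-\eta_{t-\tau}(y))\rho_0(y)v_{t-\tau}(y)dy}{\int_{\Omega_0}\psi(\eta_t(x)-\eta_{t-\tau}(y))\rho_0(y)dy}-v_t(x)$,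 with prescribed initial history $(\eta_s,v_s)$, $s\in[-\tau,0]$, where $\eta_0(x)=x$ and $\frac{d\eta_s(x)}{ds}=v_s(x)$ for $s\in[-\tau,0]$ (the history is a piece of the characteristic flow). Notation: $d_X(t):=\max_{x,y\in\overline\Omega_0}|\eta_t(x)-\eta_t(y)|$, $d_V(t):=\max_{x,y\in\overline\Omega_0}|v_t(x)-v_t(y)|$ for $t\ge-\tau$, and $R_V:=\max_{s\in[-\tau,0]}\max_{x\in\overline\Omega_0}|v_s(x)|$. *)

(* Defs.v *)
From Stdlib Require Import Reals Lra ClassicalEpsilon.
From Stdlib Require Vectors.Fin.
Open Scope R_scope.

Definition Vec (d : nat) := Fin.t d -> R.

Fixpoint sum_fin (n : nat) : (Fin.t n -> R) -> R :=
  match n with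
  | O => fun _ => 0
  | S m => fun f => f Fin.F1 + sum_fin m (fun i => f (Fin.FS i))
  end.

Definition vsub {d} (x y : Vec d) : Vec d := fun i => x i - y i.
Definition vscale {d} (a : R) (x : Vec d) : Vec d := fun i => a * x i.
Definition vnorm {d} (x : Vec d) : R := sqrt (sum_fin d (fun i => x i * x i)).

Definition is_open {d} (O : Vec d -> Prop) : Prop :=
  forall x, O x -> exists r, 0 < r /\ forall y, vnorm (vsub y x) < r -> O y.
Definition is_bounded {d} (O : Vec d -> Prop) : Prop :=
  exists B, forall x, O x -> vnorm x <= B.
Definition closure {d} (O : Vec d -> Prop) (x : Vec d) : Prop :=
  forall eps, 0 < eps -> exists y, O y /\ vnorm (vsub y x) < eps.

Definition cont_on {d} (K : Vec d -> Prop) (f : Vec d -> R) : Prop :=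
  forall x, K x -> forall eps, 0 < eps -> exists delta, 0 < delta /\
    forall y, K y -> vnorm (vsub y x) < delta -> Rabs (f y - f x) < eps.
Definition vcont_on {d} (K : Vec d -> Prop) (f : Vec d -> Vec d) : Prop :=
  forall x, K x -> forall eps, 0 < eps -> exists delta, 0 < delta /\
    forall y, K y -> vnorm (vsub y x) < delta -> vnorm (vsub (f y) (f x)) < eps.

Definition assumption_A0 {d} (psi : Vec d -> R) (psit : R -> R) : Prop :=
  (forall x, 0 < psi x) /\
  (forall x eps, 0 < eps -> exists delta, 0 < delta /\
     forall y, vnorm (vsub y x) < delta -> Rabs (psi y - psi x) < eps) /\
  (forall x, psi x = psit (vnorm x)) /\
  (forall r s, 0 <= r -> r <= s -> psit s <= psit r) /\
  (forall r, 0 <= r -> 0 < psit r) /\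
  (exists B, forall r, 0 <= r -> psit r <= B) /\
  psit 0 = 1.

(* ---------- the integration  f |-> \int_{Omega_0} f(y) rho_0(y) dy ----------
   Abstracted as a normalised positive linear functional on functions that are
   continuous on the compact set K = closure Omega_0. *)
Definition avg_functional {d} (K : Vec d -> Prop) (I : (Vec d -> R) -> R) : Prop :=
  (forall f g a, cont_on K f -> cont_on K g ->
      I (fun y => a * f y + g y) = a * I f + I g) /\
  (forall f, cont_on K f -> (forall y, K y -> 0 <= f y) -> 0 <= I f) /\
  (forall f g, cont_on K f -> (forall y, K y -> f y = g y) -> I f = I g) /\
  I (fun _ => 1) = 1.

Definition vderiv_within {d} (S : R -> Prop) (f : R -> Vec d) (t : R) (D : Vec d) : Prop :=
  forall eps, 0 < eps -> exists delta, 0 < delta /\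
    forall h, h <> 0 -> Rabs h < delta -> S (t + h) ->
      vnorm (vsub (vscale (/ h) (vsub (f (t + h)) (f t))) D) <= eps.

(* eta in C^1([0,oo); C(K)) with K equipped with the sup norm *)
Definition C1_into_C {d} (K : Vec d -> Prop) (eta : R -> Vec d -> Vec d) : Prop :=
  exists D : R -> Vec d -> Vec d,
    (forall t, 0 <= t -> vcont_on K (eta t) /\ vcont_on K (D t)) /\
    (forall t, 0 <= t -> forall eps, 0 < eps -> exists delta, 0 < delta /\
       forall h, h <> 0 -> Rabs h < delta -> 0 <= t + h -> forall x, K x ->
         vnorm (vsub (vscale (/ h) (vsub (eta (t + h) x) (eta t x))) (D t x)) <= eps) /\
    (forall t, 0 <= t -> forall eps, 0 < eps -> exists delta, 0 < delta /\
       forall t', 0 <= t' -> Rabs (t' - t) < delta -> forall x, K x ->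
         vnorm (vsub (D t' x) (D t x)) <= eps).

Definition jcont_on {d} (tau : R) (K : Vec d -> Prop) (v : R -> Vec d -> Vec d) : Prop :=
  forall t x, -tau <= t -> K x -> forall eps, 0 < eps -> exists delta, 0 < delta /\
    forall t' x', -tau <= t' -> K x' -> Rabs (t' - t) < delta ->
      vnorm (vsub x' x) < delta -> vnorm (vsub (v t' x') (v t x)) < eps.

Definition solves_L {d} (tau : R) (Om : Vec d -> Prop) (I : (Vec d -> R) -> R)
    (psi : Vec d -> R) (eta v : R -> Vec d -> Vec d) : Prop :=
  forall x t, Om x -> 0 < t ->
    vderiv_within (fun _ => True) (fun s => eta s x) t (v t x) /\
    vderiv_within (fun _ => True) (fun s => v s x) t
      (fun i => I (fun y => psi (vsub (eta t x) (eta (t - tau) y)) * v (t - tau) y i)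
                / I (fun y => psi (vsub (eta t x) (eta (t - tau) y)))
                - v t x i).

Definition history_compatible {d} (tau : R) (K : Vec d -> Prop)
    (eta v : R -> Vec d -> Vec d) : Prop :=
  forall x, K x ->
    eta 0 x = x /\
    forall s, -tau <= s <= 0 ->
      vderiv_within (fun r => -tau <= r <= 0) (fun r => eta r x) s (v s x).

Definition Rsup (E : R -> Prop) : R := epsilon (inhabits 0) (fun m => is_lub E m).

Definition dX {d} (K : Vec d -> Prop) (eta : R -> Vec d -> Vec d) (t : R) : R :=
  Rsup (fun r => exists x y, K x /\ K y /\ r = vnorm (vsub (eta t x) (eta t y))).
Definition dV {d} (K : Vec d -> Prop) (v : R -> Vec d -> Vec d) (t : R) : R :=
  Rsup (fun r => exists x y, K x /\ K y /\ r = vnorm (vsub (v t x) (v t y))).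
Definition RV {d} (tau : R) (K : Vec d -> Prop) (v : R -> Vec d -> Vec d) : R :=
  Rsup (fun r => exists s x, -tau <= s <= 0 /\ K x /\ r = vnorm (v s x)).

(* flocking condition:
   d_V(0) + \int_{-tau}^0 d_V(s) ds < \int_{d_X(-tau) + R_V tau}^oo psit(s) ds.
   Since psit >= 0, the improper integral is the sup of \int_a^b, b >= a. *)
Definition flocking_condition {d} (tau : R) (K : Vec d -> Prop) (psit : R -> R)
    (eta v : R -> Vec d -> Vec d) : Prop :=
  let a := dX K eta (- tau) + RV tau K v * tau in
  exists b, a <= b /\
    exists (pr1 : Riemann_integrable (dV K v) (- tau) 0)
           (pr2 : Riemann_integrable psit a b),
      dV K v 0 + RiemannInt pr1 < RiemannInt pr2.

(* Main.v *)
Require Import Defs.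
From Stdlib Require Import Reals Lra Lia ZArith Classical ClassicalEpsilon FunctionalExtensionality.
From Coquelicot Require Import Coquelicot.
Require Import Defs.
Open Scope R_scope.

Lemma cont_eps (f : R -> R) x : continuity_pt f x ->
  forall e, 0 < e -> exists d, 0 < d /\ forall y, Rabs (y - x) < d -> Rabs (f y - f x) < e.
Proof.
  intros H e He. destruct (H e He) as [d [Hd H2]]. exists d; split; auto.
  intros y Hy. destruct (Req_dec y x) as [->|Hne].
  - rewrite Rminus_diag, Rabs_R0; auto.
  - apply (H2 y). split; [split; [exact I|auto]|]. exact Hy.
Qed.

Lemma le_eps (a b : R) : (forall e, 0 < e -> a <= b + e) -> a <= b.
Proof. apply Rle_plus_epsilon. Qed.

Lemma lub_below (E : R -> Prop) sg r : is_lub E sg -> r < sg -> exists s, E s /\ r < s.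
Proof.
  intros [Hub Hlub] Hr. destruct (classic (exists s, E s /\ r < s)) as [H|H]; auto.
  exfalso. assert (sg <= r); [|lra]. apply Hlub. intros s Hs.
  destruct (Rle_lt_dec s r); auto. exfalso; apply H; eauto.
Qed.

Lemma dini (F : R -> R) (a b : R) : a < b ->
  (forall t, a < t <= b -> forall e, 0 < e -> exists d, 0 < d /\
      forall s, t - d < s < t -> a <= s -> F t <= F s + e) ->
  (forall t, a < t < b -> forall e, 0 < e -> exists d, 0 < d /\
      forall h, 0 < h < d -> F (t + h) <= F t + e * h) ->
  (forall e, 0 < e -> exists d, 0 < d /\ forall h, 0 < h < d -> F (a + h) <= F a + e) ->
  F b <= F a.
Proof.
  intros Hab Hl Hr Ha.
  assert (Main : forall ep, 0 < ep -> F b <= F a + ep * (b - a + 1)).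
  { intros ep Hep.
    set (E := fun s => a <= s <= b /\ forall r, a <= r <= s -> F r <= F a + ep * (r - a + 1)).
    assert (Eb : bound E) by (exists b; intros s [Hs _]; lra).
    assert (EA : E a).
    { split; [lra|]. intros r Hr'. replace r with a by lra. nra. }
    destruct (completeness E Eb (ex_intro _ a EA)) as [sg Hsg].
    pose proof Hsg as [Hub Hlub].
    assert (Hsa : a <= sg) by (apply Hub; exact EA).
    assert (Hsb : sg <= b) by (apply Hlub; intros s [Hs _]; lra).
    assert (P : forall r, a <= r < sg -> F r <= F a + ep * (r - a + 1)).
    { intros r Hr'. destruct (lub_below E sg r Hsg (proj2 Hr')) as [s [[_ Hs] Hrs]].
      apply Hs; lra. }
    assert (Fs : F sg <= F a + ep * (sg - a + 1)).
    { destruct (Req_dec sg a) as [->|Hne]; [nra|].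
      apply le_eps; intros e He.
      destruct (Hl sg ltac:(lra) e He) as [d [Hd Hd2]].
      set (s := Rmax a (sg - d/2)).
      assert (Hs1 : a <= s) by apply Rmax_l.
      assert (Hs2 : s < sg) by (unfold s; apply Rmax_lub_lt; lra).
      assert (Hs3 : sg - d < s) by (unfold s; pose proof (Rmax_r a (sg - d/2)); lra).
      pose proof (Hd2 s ltac:(lra) Hs1). pose proof (P s ltac:(lra)). nra. }
    assert (ES : E sg).
    { split; [lra|]. intros r Hr'. destruct (Req_dec r sg) as [->|]; auto. apply P; lra. }
    destruct (Req_dec sg b) as [->|Hnb]; [exact (proj2 ES b ltac:(lra))|].
    exfalso.
    destruct (Req_dec sg a) as [Heq|Hna].
    - destruct (Ha ep Hep) as [d [Hd Hd2]].
      set (h := Rmin (d/2) ((b - a)/2)).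
      assert (Hh : 0 < h) by (unfold h; apply Rmin_glb_lt; lra).
      assert (Hh2 : h < d) by (unfold h; pose proof (Rmin_l (d/2) ((b-a)/2)); lra).
      assert (Hh3 : h <= (b-a)/2) by (unfold h; apply Rmin_r).
      assert (E (a + h)).
      { split; [lra|]. intros r Hr'. destruct (Req_dec r a) as [->|]; [nra|].
        replace r with (a + (r - a)) by ring. pose proof (Hd2 (r - a) ltac:(lra)).
        replace (a + (r - a) - a) with (r - a) by ring. nra. }
      pose proof (Hub _ H). lra.
    - destruct (Hr sg ltac:(lra) ep Hep) as [d [Hd Hd2]].
      set (h := Rmin (d/2) ((b - sg)/2)).
      assert (Hh : 0 < h) by (unfold h; apply Rmin_glb_lt; lra).
      assert (Hh2 : h < d) by (unfold h; pose proof (Rmin_l (d/2) ((b-sg)/2)); lra).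
      assert (Hh3 : h <= (b-sg)/2) by (unfold h; apply Rmin_r).
      assert (E (sg + h)).
      { split; [lra|]. intros r Hr'. destruct (Rle_lt_dec r sg) as [Hc|Hc].
        + apply (proj2 ES); lra.
        + replace r with (sg + (r - sg)) by ring. pose proof (Hd2 (r - sg) ltac:(lra)).
          nra. }
      pose proof (Hub _ H). lra. }
  apply le_eps; intros e He.
  pose proof (Main (e / (b - a + 1))) as M.
  assert (0 < e / (b - a + 1)) by (apply Rdiv_lt_0_compat; lra).
  specialize (M H). replace (e / (b - a + 1) * (b - a + 1)) with e in M by (field; lra). lra.
Qed.

Lemma crossing (F : R -> R) (t1 : R) :
  (forall t, continuity_pt F t) -> F 0 < 0 -> 0 <= t1 -> 0 <= F t1 ->
  exists T, 0 < T /\ F T = 0 /\ forall s, 0 <= s < T -> F s < 0.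
Proof.
  intros Hc H0 Ht1 Hf1.
  set (E := fun s => 0 <= s /\ forall r, 0 <= r <= s -> F r < 0).
  assert (E0 : E 0) by (split; [lra|]; intros r Hr; replace r with 0 by lra; auto).
  assert (Eb : bound E).
  { exists t1. intros s [Hs Hs2]. destruct (Rle_lt_dec s t1); auto.
    pose proof (Hs2 t1 ltac:(lra)); lra. }
  destruct (completeness E Eb (ex_intro _ 0 E0)) as [T HT].
  pose proof HT as [Hub Hlub].
  assert (P : forall r, 0 <= r < T -> F r < 0).
  { intros r Hr. destruct (lub_below E T r HT (proj2 Hr)) as [s [[_ Hs] Hrs]]. apply Hs; lra. }
  assert (HT0 : 0 < T).
  { destruct (cont_eps F 0 (Hc 0) (- F 0) ltac:(lra)) as [d [Hd Hd2]].
    assert (E (d/2)).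
    { split; [lra|]. intros r Hr. pose proof (Hd2 r ltac:(rewrite Rabs_right; lra)).
      apply Rabs_def2 in H. lra. }
    pose proof (Hub _ H); lra. }
  exists T; split; auto; split; [|exact P].
  destruct (Rtotal_order (F T) 0) as [Hl|[He|Hg]]; auto; exfalso.
  - destruct (cont_eps F T (Hc T) (- F T) ltac:(lra)) as [d [Hd Hd2]].
    assert (E (T + d/2)).
    { split; [lra|]. intros r Hr. destruct (Rlt_le_dec r T) as [Hc1|Hc1]; [apply P; lra|].
      pose proof (Hd2 r ltac:(rewrite Rabs_right; lra)). apply Rabs_def2 in H. lra. }
    pose proof (Hub _ H); lra.
  - destruct (cont_eps F T (Hc T) (F T) ltac:(lra)) as [d [Hd Hd2]].
    set (r := Rmax 0 (T - d/2)).
    assert (r < T) by (unfold r; apply Rmax_lub_lt; lra).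
    assert (0 <= r) by apply Rmax_l.
    assert (T - d/2 <= r) by apply Rmax_r.
    pose proof (P r ltac:(lra)) as Q1.
    pose proof (Hd2 r ltac:(rewrite Rabs_left1; lra)) as Q2. apply Rabs_def2 in Q2. lra.
Qed.

Lemma cpt_continuous f x : continuity_pt f x -> continuous f x.
Proof. intro H. apply continuity_pt_filterlim. exact H. Qed.

Lemma exRInt_all f : (forall t, continuity_pt f t) -> forall x y, ex_RInt f x y.
Proof. intros H x y. apply (ex_RInt_continuous (V:=R_CompleteNormedModule)). intros z _. apply cpt_continuous, H. Qed.

Lemma der_RInt f a0 : (forall t, continuity_pt f t) ->
  forall x, derivable_pt_lim (fun y => RInt f a0 y) x (f x).
Proof.
  intros H x. apply is_derive_Reals. apply (is_derive_RInt (V:=R_CompleteNormedModule) f (fun y => RInt f a0 y) a0 x).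
  - apply filter_forall. intros y. apply RInt_correct. apply exRInt_all; auto.
  - apply cpt_continuous, H.
Qed.

Lemma der_eps f x l : derivable_pt_lim f x l -> forall e, 0 < e -> exists d, 0 < d /\
  forall h, 0 < h < d -> f (x + h) <= f x + h * (l + e) /\ f x + h * (l - e) <= f (x + h).
Proof.
  intros H e He. destruct (H e He) as [d Hd]. exists d; split; [apply (cond_pos d)|].
  intros h Hh. assert (h <> 0) by lra. assert (Rabs h < d) by (rewrite Rabs_right; lra).
  specialize (Hd h H0 H1). apply Rabs_def2 in Hd. destruct Hd as [Hd1 Hd2].
  assert (Hq : (f (x + h) - f x) / h * h = f (x+h) - f x) by (field; lra).
  split; nra.
Qed.

Lemma der_cont f x l : derivable_pt_lim f x l -> continuity_pt f x.
Proof. intro H. apply derivable_continuous_pt. exists l. exact H. Qed.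

Lemma exp_lin : forall e, 0 < e -> exists d, 0 < d /\
  forall h, 0 < h < d -> Rabs ((1 - exp (- h)) - h) <= e * h.
Proof.
  intros e He.
  assert (D : derivable_pt_lim (fun x => exp (- x)) 0 (-1)).
  { apply is_derive_Reals. auto_derive; auto. rewrite Ropp_0, exp_0. ring. }
  destruct (der_eps _ 0 (-1) D e He) as [d [Hd H]]. exists d; split; auto.
  intros h Hh. destruct (H h Hh) as [H1 H2]. rewrite Rplus_0_l, Ropp_0, exp_0 in *.
  apply Rabs_le. split; nra.
Qed.

Lemma RInt_ub_mono f y k : (forall t, continuity_pt f t) -> (forall r s, r <= s -> f s <= f r) ->
  0 <= k -> RInt f y (y + k) <= k * f y.
Proof.
  intros Hc Hm Hk.
  apply Rle_trans with (RInt (fun _ => f y) y (y + k)).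
  - apply RInt_le; [lra| apply exRInt_all; auto | apply ex_RInt_const |].
    intros x Hx. apply Hm. lra.
  - rewrite RInt_const. unfold scal; simpl; unfold mult; simpl. lra.
Qed.

Lemma RInt_pos_ge f x y : (forall t, continuity_pt f t) -> (forall t, 0 <= f t) -> x <= y -> 0 <= RInt f x y.
Proof. intros Hc Hp Hxy. apply RInt_ge_0; auto. apply exRInt_all; auto. Qed.

Lemma RInt_split f x y z : (forall t, continuity_pt f t) -> RInt f x z = RInt f x y + RInt f y z.
Proof. intro Hc. symmetry. apply (RInt_Chasles f x y z); apply exRInt_all; auto. Qed.

Lemma scalar_A (tau Rv b : R) (V X psit : R -> R) :
  0 <= tau -> 0 <= Rv ->
  (forall t, continuity_pt V t) -> (forall t, continuity_pt X t) -> (forall t, continuity_pt psit t) ->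
  (forall r, 0 < psit r) -> (forall r, psit r <= 1) -> (forall r s, r <= s -> psit s <= psit r) ->
  (forall t, 0 <= V t) ->
  (forall t h c, 0 <= t -> 0 < h ->
     (forall s, t <= s <= t + h -> (1 - psit (X (s - tau) + Rv * tau)) * V (s - tau) <= c) ->
     V (t + h) <= exp (- h) * V t + (1 - exp (- h)) * c) ->
  (forall t h c, - tau <= t -> 0 < h -> (forall s, t <= s <= t + h -> V s <= c) ->
     X (t + h) <= X t + h * c) ->
  V 0 + RInt V (-tau) 0 < RInt psit (X (-tau) + Rv * tau) b ->
  forall t, 0 <= t -> X (t - tau) + Rv * tau < b.
Proof.
  intros Htau HR HVc HXc Hpc Hp0 Hp1 Hpm HV0 HF3 HF2 Hfl.
  set (a := X (-tau) + Rv * tau).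
  set (Phi := fun y => RInt psit a y).
  set (G := fun t => RInt V (t - tau) t).
  set (L := fun t => V t + G t + Phi (X (t - tau) + Rv * tau)).
  assert (DPhi : forall y, derivable_pt_lim Phi y (psit y)) by (intro; apply der_RInt; auto).
  assert (DG : forall t, derivable_pt_lim G t (V t - V (t - tau))).
  { intro t. assert (Ge : G = fun t => RInt V 0 t - RInt V 0 (t - tau)).
    { apply functional_extensionality. intro s. unfold G.
      pose proof (RInt_split V 0 (s - tau) s HVc) as Hs. simpl in Hs. lra. }
    rewrite Ge. apply derivable_pt_lim_minus; [apply der_RInt; auto|].
    replace (V (t - tau)) with (V (t - tau) * 1) by ring.
    apply (derivable_pt_lim_comp (fun s => s - tau) (fun y => RInt V 0 y)).
    - replace 1 with (1 - 0) by ring. apply derivable_pt_lim_minus;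
        [apply derivable_pt_lim_id | apply derivable_pt_lim_const].
    - apply der_RInt; auto. }
  assert (Hq : forall s, continuity_pt (fun s => X (s - tau) + Rv * tau) s).
  { intro s. apply continuity_pt_plus; [|apply continuity_pt_const; intros ? ?; auto].
    apply (continuity_pt_comp (fun s => s - tau) X).
    - apply continuity_pt_minus; [apply continuity_pt_id | apply continuity_pt_const; intros ? ?; auto].
    - apply HXc. }
  assert (HLc : forall t, continuity_pt L t).
  { intro t. unfold L. apply continuity_pt_plus; [apply continuity_pt_plus|].
    - apply HVc.
    - eapply der_cont; apply DG.
    - apply (continuity_pt_comp (fun s => X (s - tau) + Rv * tau) Phi); auto.
      eapply der_cont; apply DPhi. }
  assert (Phimono : forall y z, y <= z -> Phi y <= Phi z).
  { intros y z Hyz. unfold Phi. rewrite (RInt_split psit a y z Hpc).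
    pose proof (RInt_pos_ge psit y z Hpc ltac:(intro; apply Rlt_le, Hp0) Hyz). lra. }
  assert (Phistep : forall y k, 0 <= k -> Phi (y + k) <= Phi y + k * psit y).
  { intros y k Hk. unfold Phi. rewrite (RInt_split psit a y (y + k) Hpc).
    pose proof (RInt_ub_mono psit y k Hpc Hpm Hk). lra. }
  assert (Lmono : forall T, 0 < T -> L T <= L 0).
  { intros T HT. apply dini; auto.
    - intros t Ht e He. destruct (cont_eps L t (HLc t) e He) as [d [Hd H]].
      exists d; split; auto. intros s Hs _. pose proof (H s ltac:(rewrite Rabs_left; lra)).
      apply Rabs_def2 in H0. lra.
    - intros t Ht e He.
      set (y := X (t - tau) + Rv * tau).
      set (q := fun s => (1 - psit (X (s - tau) + Rv * tau)) * V (s - tau)).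
      assert (Hqc : continuity_pt q t).
      { unfold q. apply continuity_pt_mult.
        - apply continuity_pt_minus; [apply continuity_pt_const; intros ? ?; auto|].
          apply (continuity_pt_comp (fun s => X (s - tau) + Rv * tau) psit); auto.
        - apply (continuity_pt_comp (fun s => s - tau) V); auto.
          apply continuity_pt_minus; [apply continuity_pt_id | apply continuity_pt_const; intros ? ?; auto]. }
      set (A := Rabs (q t - V t) + 1).
      assert (HA : 0 < A) by (unfold A; pose proof (Rabs_pos (q t - V t)); lra).
      set (e1 := Rmin 1 (e / 4)).
      assert (He1 : 0 < e1) by (unfold e1; apply Rmin_glb_lt; lra).
      assert (He1a : e1 <= 1) by apply Rmin_l.
      assert (He1b : e1 <= e / 4) by apply Rmin_r.
      destruct (cont_eps q t Hqc e1 He1) as [d1 [Hd1 Hd1']].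
      destruct (exp_lin ((e / 4) / A) ltac:(apply Rdiv_lt_0_compat; lra)) as [d2 [Hd2 Hd2']].
      destruct (der_eps G t _ (DG t) (e / 4) ltac:(lra)) as [d3 [Hd3 Hd3']].
      destruct (cont_eps V (t - tau) (HVc _) (e / 4) ltac:(lra)) as [d4 [Hd4 Hd4']].
      exists (Rmin (Rmin d1 d2) (Rmin d3 d4)). split.
      { repeat apply Rmin_glb_lt; auto. }
      intros h Hh.
      assert (h < d1 /\ h < d2 /\ h < d3 /\ h < d4) as [Hh1 [Hh2 [Hh3 Hh4]]].
      { destruct Hh as [_ Hh]. repeat split; eapply Rlt_le_trans; try apply Hh;
        eauto using Rle_trans, Rmin_l, Rmin_r. }
      assert (T1 : V (t + h) <= exp (- h) * V t + (1 - exp (- h)) * (q t + e1)).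
      { apply HF3; try lra. intros s Hs.
        pose proof (Hd1' s ltac:(rewrite Rabs_right; lra)). apply Rabs_def2 in H.
        unfold q in *. lra. }
      pose proof (Hd2' h ltac:(lra)) as E2.
      assert (T1' : V (t + h) <= V t + h * (q t - V t) + h * (e / 4) + h * e1).
      { assert (Hc : Rabs (q t + e1 - V t) <= A).
        { unfold A. replace (q t + e1 - V t) with ((q t - V t) + e1) by ring.
          eapply Rle_trans; [apply Rabs_triang|]. rewrite (Rabs_right e1); lra. }
        assert (Hm : ((1 - exp (- h)) - h) * (q t + e1 - V t) <= e / 4 * h).
        { eapply Rle_trans; [apply Rle_abs|]. rewrite Rabs_mult.
          apply Rle_trans with ((e / 4 / A * h) * A).
          - apply Rmult_le_compat; auto using Rabs_pos.
          - right. field. lra. }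
        nra. }
      destruct (Hd3' h ltac:(lra)) as [T2 _].
      assert (T3 : X (t + h - tau) <= X (t - tau) + h * (V (t - tau) + e / 4)).
      { replace (t + h - tau) with ((t - tau) + h) by ring. apply HF2; try lra.
        intros s Hs. pose proof (Hd4' s ltac:(rewrite Rabs_right; lra)). apply Rabs_def2 in H. lra. }
      assert (T3' : Phi (X (t + h - tau) + Rv * tau) <= Phi y + h * (V (t - tau) + e / 4) * psit y).
      { apply Rle_trans with (Phi (y + h * (V (t - tau) + e / 4))).
        - apply Phimono. unfold y; lra.
        - apply Phistep. pose proof (HV0 (t - tau)). nra. }
      unfold L. replace (t + h - tau) with (t + h - tau) by ring.
      assert (Hqt : q t = (1 - psit y) * V (t - tau)) by reflexivity.
      pose proof (Hp1 y). pose proof (Hp0 y). pose proof (HV0 (t - tau)).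
      assert (0 <= h * psit y * (e / 4)) by (apply Rmult_le_pos; nra).
      assert (h * e1 <= h * (e / 4)) by (apply Rmult_le_compat_l; lra).
      assert (h * psit y * (e / 4) <= h * (e / 4)).
      { rewrite Rmult_assoc. apply Rmult_le_compat_l; [lra|]. nra. }
      assert (h * (V (t - tau) + e / 4) * psit y = h * psit y * V (t - tau) + h * psit y * (e / 4)) by ring.
      assert (h * (q t - V t) = h * V (t - tau) - h * psit y * V (t - tau) - h * V t) by (rewrite Hqt; ring).
      assert (h * (V t - V (t - tau) + e / 4) = h * V t - h * V (t - tau) + h * (e / 4)) by ring.
      assert (e * h = h * (e/4) * 4) by field.
      change (Phi (X (t - tau) + Rv * tau)) with (Phi y). lra.
    - intros e He. destruct (cont_eps L 0 (HLc 0) e He) as [d [Hd H]].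
      exists d; split; auto. intros h Hh. pose proof (H (0 + h) ltac:(rewrite Rabs_right; lra)).
      apply Rabs_def2 in H0. lra. }
  assert (L0 : L 0 = V 0 + RInt V (- tau) 0).
  { unfold L, G, Phi. replace (0 - tau) with (- tau) by ring. fold a. rewrite RInt_point. simpl. unfold zero; simpl. lra. }
  intros t Ht.
  assert (Lt : L t <= L 0) by (destruct (Req_dec t 0) as [->|]; [lra| apply Lmono; lra]).
  assert (LG : 0 <= G t) by (apply RInt_pos_ge; auto; lra).
  pose proof (HV0 t).
  destruct (Rlt_le_dec (X (t - tau) + Rv * tau) b) as [Hlt|Hge]; auto. exfalso.
  pose proof (Phimono _ _ Hge). rewrite L0 in Lt. unfold L in Lt. unfold Phi at 1 in H0. fold a in Hfl.
  unfold Phi in *. lra.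
Qed.

Lemma exp_facts h : 0 <= h -> h <= 1/2 -> exp (- h) <= 1 /\ 1 - h <= exp (- h) /\ h / 2 <= 1 - exp (- h).
Proof.
  intros H1 H2. pose proof (exp_ineq1_le (- h)). pose proof (exp_ineq1_le h).
  assert (exp h * exp (- h) = 1) by (rewrite <- exp_plus; replace (h + - h) with 0 by ring; apply exp_0).
  pose proof (exp_pos h). pose proof (exp_pos (-h)).
  split; [nra|split; [lra|nra]].
Qed.

Lemma scalar_B (tau ps : R) (V : R -> R) :
  0 <= tau -> 0 < ps -> ps <= 1 ->
  (forall t, continuity_pt V t) -> (forall t, 0 <= V t) ->
  (forall t h c, 0 <= t -> 0 < h ->
     (forall s, t <= s <= t + h -> (1 - ps) * V (s - tau) <= c) ->
     V (t + h) <= exp (- h) * V t + (1 - exp (- h)) * c) ->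
  exists C, 0 < C /\ forall D, (forall s, -tau <= s <= 0 -> V s <= D) ->
     forall t, 0 <= t -> V t <= D * exp (- C * t).
Proof.
  intros Htau Hps Hps1 HVc HV0 HF3.
  set (C := ps / (8 * (1 + tau))).
  assert (HC : 0 < C) by (unfold C; apply Rdiv_lt_0_compat; lra).
  assert (HC1 : C <= ps / 8).
  { unfold C. apply Rmult_le_compat_l; [lra|]. apply Rinv_le_contravar; lra. }
  assert (HC2 : C * tau <= ps / 8).
  { unfold C. replace (ps / (8 * (1 + tau)) * tau) with (ps / 8 * (tau / (1 + tau))) by (field; lra).
    assert (tau / (1 + tau) <= 1).
    { apply Rmult_le_reg_r with (1 + tau); [lra|]. unfold Rdiv. rewrite Rmult_assoc, Rinv_l; lra. }
    nra. }
  set (rho := (1 - ps) * exp (C * tau)).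
  assert (Hrho : rho <= 1 - ps / 2).
  { pose proof (exp_ineq1_le (- (C * tau))).
    assert (exp (C * tau) * exp (- (C * tau)) = 1) by (rewrite <- exp_plus; replace (C * tau + - (C * tau)) with 0 by ring; apply exp_0).
    pose proof (exp_pos (C * tau)). pose proof (exp_pos (-(C*tau))).
    assert (Hr : rho * exp (- (C * tau)) = 1 - ps) by (unfold rho; rewrite Rmult_assoc, H0; ring).
    assert (0 <= rho) by (unfold rho; apply Rmult_le_pos; lra).
    assert (rho * (1 - ps / 8) <= 1 - ps) by nra.
    nra. }
  exists C; split; auto.
  intros D HD t Ht.
  assert (HD0 : 0 <= D) by (pose proof (HD 0 ltac:(lra)); pose proof (HV0 0); lra).
  apply le_eps; intros ep Hep.
  set (g := fun s => (D + ep) * exp (- C * s)).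
  assert (Hgm : forall r s, r <= s -> g s <= g r).
  { intros r s Hrs. unfold g. apply Rmult_le_compat_l; [lra|].
    destruct (Req_dec r s) as [->|]; [lra|]. left; apply exp_increasing. nra. }
  assert (Hgneg : forall s, s <= 0 -> D + ep <= g s).
  { intros s Hs. unfold g. pose proof (exp_ineq1_le (- C * s)).
    assert (0 <= - C * s) by nra. assert (1 <= exp (- C * s)) by lra. nra. }
  assert (Hgoal : V t <= g t).
  { destruct (Rlt_le_dec (V t) (g t)) as [|Hge]; [lra|].
    exfalso.
    destruct (crossing (fun s => V s - g s) t) as [T [HT [HTe HTl]]]; auto; try lra.
    - intro s. apply continuity_pt_minus; auto. unfold g.
      apply continuity_pt_mult; [apply continuity_pt_const; intros ? ?; auto|].
      apply (continuity_pt_comp (fun s => - C * s) exp).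
      + apply continuity_pt_mult; [apply continuity_pt_const; intros ? ?; auto| apply continuity_pt_id].
      + apply derivable_continuous_pt, derivable_pt_exp.
    - pose proof (HD 0 ltac:(lra)). pose proof (Hgneg 0 ltac:(lra)). lra.
    - set (h := Rmin T (1/2) / 2).
      assert (Hh : 0 < h) by (unfold h; pose proof (Rmin_glb_lt T (1/2) 0 HT ltac:(lra)); lra).
      assert (Hh1 : h < T) by (unfold h; pose proof (Rmin_l T (1/2)); lra).
      assert (Hh2 : h <= 1/2) by (unfold h; pose proof (Rmin_r T (1/2)); lra).
      assert (K1 : V T <= exp (- h) * V (T - h) + (1 - exp (- h)) * ((1 - ps) * g (T - h - tau))).
      { replace T with ((T - h) + h) at 1 by ring. apply HF3; try lra.
        intros s Hs. apply Rmult_le_compat_l; [lra|].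
        destruct (Rle_lt_dec (s - tau) 0) as [Hc|Hc].
        - pose proof (HD (s - tau) ltac:(lra)). pose proof (Hgneg (T - h - tau) ltac:(lra)). lra.
        - apply Rle_trans with (g (s - tau)); [|apply Hgm; lra].
          destruct (Rlt_le_dec (s - tau) T) as [Hc2|Hc2].
          + pose proof (HTl (s - tau) ltac:(lra)). simpl in H. lra.
          + replace (s - tau) with T by lra. simpl in HTe. lra. }
      simpl in HTe. pose proof (HTl (T - h) ltac:(lra)) as K2. simpl in K2.
      destruct (exp_facts h ltac:(lra) Hh2) as [E1 [E2 E3]].
      set (G0 := (D + ep) * exp (- C * T)).
      assert (HG0 : 0 < G0) by (unfold G0; pose proof (exp_pos (- C * T)); nra).
      assert (Hg1 : g (T - h) = G0 * exp (C * h)).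
      { unfold g, G0. rewrite Rmult_assoc, <- exp_plus. f_equal. f_equal. ring. }
      assert (Hg2 : g (T - h - tau) = G0 * exp (C * h) * exp (C * tau)).
      { unfold g, G0. rewrite !Rmult_assoc, <- !exp_plus. f_equal. f_equal. ring. }
      assert (HgT : g T = G0) by reflexivity.
      rewrite Hg1 in K2. rewrite Hg2 in K1.
      assert (HVT : V T = G0) by lra.
      set (E := exp (- h)) in *. set (Q := exp (C * h)) in *.
      assert (HQ : Q * (1 - C * h) <= 1).
      { pose proof (exp_ineq1_le (- (C * h))).
        assert (Q * exp (- (C * h)) = 1) by (unfold Q; rewrite <- exp_plus; replace (C * h + - (C * h)) with 0 by ring; apply exp_0).
        pose proof (exp_pos (C*h)) as HQ0. fold Q in HQ0.
        apply Rle_trans with (Q * exp (- (C * h))); [apply Rmult_le_compat_l; lra | lra]. }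
      assert (HQp : 0 < Q) by apply exp_pos.
      assert (Hrho' : (1 - ps) * (G0 * Q * exp (C * tau)) = G0 * Q * rho) by (unfold rho; ring).
      rewrite Hrho' in K1.
      assert (K3 : G0 < G0 * Q * (E + (1 - E) * rho)).
      { assert (0 < E) by apply exp_pos.
        assert (E * V (T - h) < E * (G0 * Q)) by (apply Rmult_lt_compat_l; lra).
        nra. }
      assert (K4 : Q * (E + (1 - E) * rho) <= 1).
      { assert (E + (1 - E) * rho <= 1 - h * ps / 4) by nra.
        assert (1 - h * ps / 4 <= 1 - C * h) by nra.
        nra. }
      nra. }
  unfold g in Hgoal. pose proof (exp_pos (- C * t)).
  assert (exp (- C * t) <= 1).
  { destruct (Req_dec t 0) as [->|]. { rewrite Rmult_0_r, exp_0; lra. }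
    rewrite <- exp_0. left. apply exp_increasing. nra. }
  nra.
Qed.

Definition ip {d} (x y : Vec d) : R := sum_fin d (fun i => x i * y i).

Lemma sum_fin_ext d (f g : Fin.t d -> R) : (forall i, f i = g i) -> sum_fin d f = sum_fin d g.
Proof. induction d; simpl; intros H; auto. rewrite H, (IHd (fun i => f (Fin.FS i)) (fun i => g (Fin.FS i))); auto. Qed.

Lemma sum_fin_lin d (f g : Fin.t d -> R) a b :
  sum_fin d (fun i => a * f i + b * g i) = a * sum_fin d f + b * sum_fin d g.
Proof. induction d; simpl; [ring|]. rewrite (IHd (fun i => f (Fin.FS i)) (fun i => g (Fin.FS i))). ring. Qed.

Lemma sum_fin_nonneg d (f : Fin.t d -> R) : (forall i, 0 <= f i) -> 0 <= sum_fin d f.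
Proof. induction d; simpl; intros H; [lra|]. pose proof (H Fin.F1). pose proof (IHd (fun i => f (Fin.FS i)) (fun i => H _)). lra. Qed.

Lemma sum_fin_le d (f g : Fin.t d -> R) : (forall i, f i <= g i) -> sum_fin d f <= sum_fin d g.
Proof. induction d; simpl; intros H; [lra|]. pose proof (H Fin.F1). pose proof (IHd (fun i => f (Fin.FS i)) (fun i => g (Fin.FS i)) (fun i => H _)). lra. Qed.

Lemma sum_fin_term d (f : Fin.t d -> R) i : (forall j, 0 <= f j) -> f i <= sum_fin d f.
Proof.
  revert f. induction i as [n|n i IH]; intros f H; simpl.
  - pose proof (sum_fin_nonneg n (fun j => f (Fin.FS j)) (fun j => H _)). lra.
  - pose proof (H Fin.F1). pose proof (IH (fun j => f (Fin.FS j)) (fun j => H _)). lra.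
Qed.

Lemma ip_sym {d} (x y : Vec d) : ip x y = ip y x.
Proof. unfold ip. apply sum_fin_ext. intro; ring. Qed.

Lemma ip_lin {d} (x y z : Vec d) a b : ip (fun i => a * x i + b * y i) z = a * ip x z + b * ip y z.
Proof. unfold ip. rewrite <- sum_fin_lin. apply sum_fin_ext. intro; ring. Qed.

Lemma ip_sub {d} (x y z : Vec d) : ip (vsub x y) z = ip x z - ip y z.
Proof. unfold ip. rewrite (sum_fin_ext _ _ (fun i => 1 * (x i * z i) + (-1) * (y i * z i))) by (intro; unfold vsub; ring).
  rewrite sum_fin_lin. ring. Qed.

Lemma ip_scale {d} (x z : Vec d) a : ip (vscale a x) z = a * ip x z.
Proof. unfold ip. rewrite (sum_fin_ext _ _ (fun i => a * (x i * z i) + 0 * (x i * z i))) by (intro; unfold vscale; ring).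
  rewrite sum_fin_lin. ring. Qed.

Lemma ip_pos {d} (x : Vec d) : 0 <= ip x x.
Proof. apply sum_fin_nonneg. intro; nra. Qed.

Lemma vnorm_pos {d} (x : Vec d) : 0 <= vnorm x.
Proof. apply sqrt_pos. Qed.

Lemma vnorm_sq {d} (x : Vec d) : vnorm x * vnorm x = ip x x.
Proof. unfold vnorm. apply sqrt_sqrt. apply ip_pos. Qed.

Lemma ip_expand {d} (x y : Vec d) l :
  ip (fun i => x i - l * y i) (fun i => x i - l * y i) = ip x x - 2 * l * ip x y + l * l * ip y y.
Proof. unfold ip.
  rewrite (sum_fin_ext _ _ (fun i => 1 * (x i * x i) + 1 * ((-2*l) * (x i * y i) + (l*l) * (y i * y i)))) by (intro; ring).
  rewrite sum_fin_lin. rewrite (sum_fin_lin d (fun i => x i * y i) (fun i => y i * y i)). ring. Qed.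

Lemma cauchy_schwarz {d} (x y : Vec d) : ip x y <= vnorm x * vnorm y.
Proof.
  pose proof (vnorm_sq x) as Hx. pose proof (vnorm_sq y) as Hy.
  pose proof (vnorm_pos x). pose proof (vnorm_pos y).
  assert (Q : forall l, 0 <= ip x x - 2 * l * ip x y + l * l * ip y y).
  { intro l. rewrite <- ip_expand. apply ip_pos. }
  destruct (Req_dec (vnorm y) 0) as [Hb|Hb].
  - rewrite Hb in Hy. rewrite Hb, Rmult_0_r.
    destruct (Rle_lt_dec (ip x y) 0); auto. exfalso.
    pose proof (Q ((ip x x + 1) / (2 * ip x y))).
    replace (2 * ((ip x x + 1) / (2 * ip x y)) * ip x y) with (ip x x + 1) in H1 by (field; lra).
    rewrite <- Hy in H1. nra.
  - pose proof (Q (ip x y / ip y y)).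
    assert (0 < ip y y) by (rewrite <- Hy; nra).
    assert (ip x y * ip x y <= ip x x * ip y y).
    { replace (ip x x - 2 * (ip x y / ip y y) * ip x y + ip x y / ip y y * (ip x y / ip y y) * ip y y)
        with ((ip x x * ip y y - ip x y * ip x y) / ip y y) in H1 by (field; lra).
      apply Rmult_le_compat_r with (r := ip y y) in H1; [|lra].
      unfold Rdiv in H1. rewrite Rmult_assoc, Rinv_l in H1; lra. }
    rewrite <- Hx, <- Hy in H3.
    destruct (Rle_lt_dec (ip x y) 0); [nra|].
    apply Rsqr_incr_0_var; [unfold Rsqr; nra | apply Rmult_le_pos; auto].
Qed.

Lemma abs_ip {d} (x y : Vec d) : Rabs (ip x y) <= vnorm x * vnorm y.
Proof.
  apply Rabs_le. split; [|apply cauchy_schwarz].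
  pose proof (cauchy_schwarz (vscale (-1) x) y). rewrite ip_scale in H.
  assert (vnorm (vscale (-1) x) = vnorm x).
  { unfold vnorm. f_equal. apply sum_fin_ext. intro; unfold vscale; ring. }
  rewrite H0 in H. lra.
Qed.

Definition vadd {d} (x y : Vec d) : Vec d := fun i => x i + y i.

Lemma vnorm_triang {d} (x y : Vec d) : vnorm (vadd x y) <= vnorm x + vnorm y.
Proof.
  pose proof (vnorm_pos x). pose proof (vnorm_pos y).
  assert (E : ip (vadd x y) (vadd x y) = ip x x + 2 * ip x y + ip y y).
  { unfold ip, vadd.
    rewrite (sum_fin_ext _ _ (fun i => 1 * (x i * x i) + 1 * (2 * (x i * y i) + 1 * (y i * y i)))) by (intro; ring).
    rewrite sum_fin_lin. rewrite (sum_fin_lin d (fun i => x i * y i) (fun i => y i * y i)). ring. }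
  apply Rsqr_incr_0_var; [|lra]. unfold Rsqr.
  pose proof (vnorm_sq (vadd x y)). pose proof (vnorm_sq x). pose proof (vnorm_sq y).
  pose proof (cauchy_schwarz x y). nra.
Qed.

Lemma vnorm_ext {d} (x y : Vec d) : (forall i, x i = y i) -> vnorm x = vnorm y.
Proof. intro H. unfold vnorm. f_equal. apply sum_fin_ext. intro; rewrite H; auto. Qed.

Lemma vnorm_tri3 {d} (x y z : Vec d) : vnorm (vsub x z) <= vnorm (vsub x y) + vnorm (vsub y z).
Proof.
  rewrite (vnorm_ext (vsub x z) (vadd (vsub x y) (vsub y z))) by (intro; unfold vsub, vadd; ring).
  apply vnorm_triang.
Qed.

Lemma vnorm_sym {d} (x y : Vec d) : vnorm (vsub x y) = vnorm (vsub y x).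
Proof.
  assert (vsub y x = vscale (-1) (vsub x y)) by (apply functional_extensionality; intro; unfold vsub, vscale; ring).
  rewrite H. unfold vnorm. f_equal. apply sum_fin_ext. intro; unfold vscale; ring.
Qed.

Lemma vnorm_scale {d} a (x : Vec d) : vnorm (vscale a x) = Rabs a * vnorm x.
Proof.
  unfold vnorm. rewrite <- (sqrt_Rsqr (Rabs a)) by apply Rabs_pos. rewrite <- sqrt_mult_alt.
  - f_equal. rewrite <- Rsqr_abs. unfold Rsqr.
    rewrite (sum_fin_ext _ _ (fun i => (a*a) * (x i * x i) + 0 * (x i * x i))) by (intro; unfold vscale; ring).
    rewrite sum_fin_lin. ring.
  - apply Rle_0_sqr.
Qed.

Lemma coord_le {d} (x : Vec d) i : Rabs (x i) <= vnorm x.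
Proof.
  unfold vnorm. rewrite <- sqrt_Rsqr_abs. apply sqrt_le_1_alt. unfold Rsqr.
  apply (sum_fin_term d (fun j => x j * x j)). intro; nra.
Qed.

Lemma vnorm_zero {d} (x : Vec d) : (forall i, x i = 0) -> vnorm x = 0.
Proof. intro H. unfold vnorm. rewrite <- sqrt_0. f_equal.
  rewrite (sum_fin_ext d _ (fun i => 0 * 0 + 0 * 0)) by (intro; rewrite H; ring).
  rewrite (sum_fin_lin d (fun _ => 0) (fun _ => 0) 0 0). ring. Qed.

Lemma vnorm_self {d} (x : Vec d) : vnorm (vsub x x) = 0.
Proof. apply vnorm_zero. intro; unfold vsub; ring. Qed.

Lemma vnorm_le_dir {d} (w : Vec d) c : 0 <= c ->
  (forall e : Vec d, vnorm e = 1 -> ip w e <= c) -> vnorm w <= c.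
Proof.
  intros Hc H. destruct (Req_dec (vnorm w) 0) as [Hz|Hz]; [lra|].
  pose proof (vnorm_pos w).
  set (e := vscale (/ vnorm w) w).
  assert (He : vnorm e = 1).
  { unfold e. rewrite vnorm_scale, Rabs_right; [field; lra|]. left; apply Rinv_0_lt_compat; lra. }
  specialize (H e He). unfold e in H. rewrite ip_sym, ip_scale, <- vnorm_sq in H.
  replace (/ vnorm w * (vnorm w * vnorm w)) with (vnorm w) in H by (field; lra). auto.
Qed.

Lemma ip_le_norm {d} (w e : Vec d) : vnorm e = 1 -> ip w e <= vnorm w.
Proof. intro He. pose proof (cauchy_schwarz w e). rewrite He in H. lra. Qed.

Lemma Rabs_bnd (x a : R) : Rabs x <= a -> -a <= x <= a.
Proof. intro H. pose proof (Rle_abs x). pose proof (Rle_abs (-x)). rewrite Rabs_Ropp in H1. lra. Qed.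


Definition vconv {d} (w : nat -> Vec d) (l : Vec d) :=
  forall e, 0 < e -> exists N, forall n, (N <= n)%nat -> vnorm (vsub (w n) l) < e.
Definition rconv (u : nat -> R) l :=
  forall e, 0 < e -> exists N, forall n, (N <= n)%nat -> Rabs (u n - l) < e.

Lemma extract (P : nat -> nat -> Prop) : (forall N k, exists p, (N <= p)%nat /\ P k p) ->
  exists phi : nat -> nat, (forall n, phi n < phi (S n))%nat /\ forall n, P n (phi n).
Proof.
  intros H.
  set (f := fun N k => proj1_sig (constructive_indefinite_description _ (H N k))).
  assert (Hf : forall N k, (N <= f N k)%nat /\ P k (f N k)).
  { intros N k. unfold f. destruct (constructive_indefinite_description _ (H N k)); simpl; auto. }
  exists (fix phi n := match n with O => f O O | S m => f (S (phi m)) (S m) end).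
  split.
  - intro n. simpl. destruct (Hf (S ((fix phi n := match n with O => f O O | S m => f (S (phi m)) (S m) end) n)) (S n)). lia.
  - intro n. destruct n; simpl; apply Hf.
Qed.

Lemma strict_ge (phi : nat -> nat) : (forall n, phi n < phi (S n))%nat -> forall n, (n <= phi n)%nat.
Proof. intros H n. induction n; [lia|]. specialize (H n). lia. Qed.

Lemma strict_mono (phi : nat -> nat) : (forall n, phi n < phi (S n))%nat -> forall n m, (n <= m)%nat -> (phi n <= phi m)%nat.
Proof. intros H n m Hnm. induction Hnm; [lia|]. specialize (H m). lia. Qed.

Lemma BW1 (u : nat -> R) M : (forall n, Rabs (u n) <= M) ->
  exists phi : nat -> nat, (forall n, phi n < phi (S n))%nat /\ exists l, rconv (fun n => u (phi n)) l.
Proof.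
  intros HM.
  destruct (Bolzano_Weierstrass u (fun c => -M <= c <= M) (compact_P3 (-M) M)) as [l Hl].
  { intro n. apply Rabs_bnd, HM. }
  destruct (extract (fun k p => Rabs (u p - l) < / INR (S k))) as [phi [Hphi Hp]].
  { intros N k. assert (Hk : 0 < / INR (S k)) by (apply Rinv_0_lt_compat, lt_0_INR; lia).
    destruct (Hl (disc l (mkposreal _ Hk)) N) as [p [Hp1 Hp2]].
    - exists (mkposreal _ Hk). intros y Hy; exact Hy.
    - exists p; split; auto. }
  exists phi; split; auto. exists l. intros e He.
  destruct (archimed_cor1 e He) as [N [HN HN0]]. exists N. intros n Hn.
  eapply Rlt_trans; [apply Hp|]. eapply Rle_lt_trans; [|exact HN].
  apply Rinv_le_contravar; [apply lt_0_INR; lia|]. apply le_INR. lia.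
Qed.

Lemma vnorm_S {d} (z : Vec (S d)) : vnorm z <= Rabs (z Fin.F1) + vnorm (fun j => z (Fin.FS j)).
Proof.
  unfold vnorm at 1. simpl.
  pose proof (vnorm_pos (fun j => z (Fin.FS j))) as H0.
  pose proof (vnorm_sq (fun j => z (Fin.FS j))) as H1. unfold ip in H1.
  apply Rsqr_incr_0_var; [|pose proof (Rabs_pos (z Fin.F1)); lra].
  rewrite Rsqr_sqrt.
  - unfold Rsqr. rewrite <- H1. pose proof (Rabs_pos (z Fin.F1)).
    assert (Rabs (z Fin.F1) * Rabs (z Fin.F1) = z Fin.F1 * z Fin.F1) by (rewrite <- Rabs_mult; apply Rabs_right; nra).
    nra.
  - pose proof (sum_fin_nonneg d (fun i => z (Fin.FS i) * z (Fin.FS i)) (fun i => ltac:(nra))). nra.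
Qed.

Lemma vnorm_tail {d} (z : Vec (S d)) : vnorm (fun j => z (Fin.FS j)) <= vnorm z.
Proof.
  unfold vnorm. apply sqrt_le_1_alt. simpl. nra.
Qed.

Lemma BWd d : forall (u : nat -> Vec d) M, (forall n, vnorm (u n) <= M) ->
  exists phi : nat -> nat, (forall n, phi n < phi (S n))%nat /\ exists l, vconv (fun n => u (phi n)) l.
Proof.
  induction d as [|d IH]; intros u M HM.
  - exists S. split; [intros; lia|]. exists (u O). intros e He. exists O. intros n _.
    unfold vnorm. simpl. rewrite sqrt_0. lra.
  - destruct (BW1 (fun n => u n Fin.F1) M) as [phi1 [Hphi1 [l1 Hl1]]].
    { intro n. eapply Rle_trans; [apply coord_le|apply HM]. }
    destruct (IH (fun n j => u (phi1 n) (Fin.FS j)) M) as [phi2 [Hphi2 [l2 Hl2]]].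
    { intro n. eapply Rle_trans; [apply vnorm_tail|apply HM]. }
    exists (fun n => phi1 (phi2 n)). split.
    { intro n. pose proof (Hphi2 n). pose proof (strict_mono phi1 Hphi1 (S (phi2 n)) (phi2 (S n)) ltac:(lia)).
      specialize (Hphi1 (phi2 n)). lia. }
    exists (fun i => Fin.caseS' i (fun _ => R) l1 (fun j => l2 j)).
    intros e He. destruct (Hl1 (e/2) ltac:(lra)) as [N1 HN1]. destruct (Hl2 (e/2) ltac:(lra)) as [N2 HN2].
    exists (max N1 N2). intros n Hn.
    eapply Rle_lt_trans; [apply vnorm_S|]. simpl.
    pose proof (HN1 (phi2 n) ltac:(pose proof (strict_ge phi2 Hphi2 n); lia)).
    pose proof (HN2 n ltac:(lia)). unfold vsub in *. simpl in *. lra.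
Qed.

Lemma closure_closed {d} (Om : Vec d -> Prop) (w : nat -> Vec d) l :
  (forall n, closure Om (w n)) -> vconv w l -> closure Om l.
Proof.
  intros Hw Hc e He. destruct (Hc (e/2) ltac:(lra)) as [N HN].
  destruct (Hw N (e/2) ltac:(lra)) as [y [Hy Hy2]]. exists y; split; auto.
  pose proof (HN N (le_n _)). pose proof (vnorm_tri3 y (w N) l). lra.
Qed.

Lemma closure_incl {d} (Om : Vec d -> Prop) x : Om x -> closure Om x.
Proof. intros H e He. exists x; split; auto. rewrite vnorm_self; auto. Qed.

Lemma closure_bounded {d} (Om : Vec d -> Prop) : is_bounded Om -> exists M, forall x, closure Om x -> vnorm x <= M.
Proof.
  intros [B HB]. exists (B + 1). intros x Hx. destruct (Hx 1 ltac:(lra)) as [y [Hy Hy2]].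
  pose proof (HB y Hy). rewrite vnorm_sym in Hy2.
  pose proof (vnorm_tri3 x y (fun _ => 0)).
  assert (E1 : vnorm (vsub x (fun _ => 0)) = vnorm x) by (apply vnorm_ext; intro; unfold vsub; ring).
  assert (E2 : vnorm (vsub y (fun _ => 0)) = vnorm y) by (apply vnorm_ext; intro; unfold vsub; ring).
  lra.
Qed.

Lemma K_compact {d} (Om : Vec d -> Prop) : is_bounded Om ->
  forall u : nat -> Vec d, (forall n, closure Om (u n)) ->
  exists phi : nat -> nat, (forall n, n <= phi n)%nat /\ exists l, closure Om l /\ vconv (fun n => u (phi n)) l.
Proof.
  intros HB u Hu. destruct (closure_bounded Om HB) as [M HM].
  destruct (BWd d u M (fun n => HM _ (Hu n))) as [phi [Hphi [l Hl]]].
  exists phi; split; [apply strict_ge; auto|]. exists l; split; auto.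
  apply (closure_closed Om (fun n => u (phi n))); auto.
Qed.

Lemma I_compact (a b : R) : forall u : nat -> R, (forall n, a <= u n <= b) ->
  exists phi : nat -> nat, (forall n, n <= phi n)%nat /\ exists l, a <= l <= b /\ rconv (fun n => u (phi n)) l.
Proof.
  intros u Hu. destruct (BW1 u (Rabs a + Rabs b)) as [phi [Hphi [l Hl]]].
  { intro n. destruct (Hu n). apply Rabs_le. split; pose proof (Rabs_pos a); pose proof (Rabs_pos b);
     pose proof (Rle_abs b); pose proof (Rle_abs (-a)); rewrite Rabs_Ropp in *; lra. }
  exists phi; split; [apply strict_ge; auto|]. exists l; split; auto.
  split.
  - apply Rnot_lt_le; intro Hc. destruct (Hl (a - l) ltac:(lra)) as [N HN]. specialize (HN N (le_n _)).
    destruct (Hu (phi N)). apply Rabs_def2 in HN. lra.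
  - apply Rnot_lt_le; intro Hc. destruct (Hl (l - b) ltac:(lra)) as [N HN]. specialize (HN N (le_n _)).
    destruct (Hu (phi N)). apply Rabs_def2 in HN. lra.
Qed.

Section ILemmas.
Variable d : nat.
Variable K : Vec d -> Prop.
Variable I : (Vec d -> R) -> R.
Hypothesis HI : avg_functional K I.

Lemma cont_const c : cont_on K (fun _ => c).
Proof. intros x Hx e He. exists 1; split; [lra|]. intros. rewrite Rminus_diag, Rabs_R0; auto. Qed.

Lemma cont_lin f g a : cont_on K f -> cont_on K g -> cont_on K (fun y => a * f y + g y).
Proof.
  intros Hf Hg x Hx e He.
  destruct (Hf x Hx (e / 2 / (Rabs a + 1))) as [d1 [Hd1 H1]].
  { apply Rdiv_lt_0_compat; [lra|]. pose proof (Rabs_pos a); lra. }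
  destruct (Hg x Hx (e / 2)) as [d2 [Hd2 H2]]; [lra|].
  exists (Rmin d1 d2); split; [apply Rmin_glb_lt; auto|].
  intros y Hy Hyx.
  specialize (H1 y Hy (Rlt_le_trans _ _ _ Hyx (Rmin_l _ _))).
  specialize (H2 y Hy (Rlt_le_trans _ _ _ Hyx (Rmin_r _ _))).
  replace (a * f y + g y - (a * f x + g x)) with (a * (f y - f x) + (g y - g x)) by ring.
  eapply Rle_lt_trans; [apply Rabs_triang|]. rewrite Rabs_mult.
  assert (Rabs a * Rabs (f y - f x) <= (Rabs a + 1) * (e / 2 / (Rabs a + 1))).
  { apply Rmult_le_compat; try apply Rabs_pos; lra. }
  replace ((Rabs a + 1) * (e / 2 / (Rabs a + 1))) with (e / 2) in H by (field; pose proof (Rabs_pos a); lra).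
  lra.
Qed.

Lemma cont_plus f g : cont_on K f -> cont_on K g -> cont_on K (fun y => f y + g y).
Proof. intros. pose proof (cont_lin f g 1 H H0). intros x Hx e He. destruct (H1 x Hx e He) as [dd [Hdd H2]].
  exists dd; split; auto. intros y Hy Hyx. specialize (H2 y Hy Hyx). rewrite !Rmult_1_l in H2. auto. Qed.

Lemma cont_scal f a : cont_on K f -> cont_on K (fun y => a * f y).
Proof. intros. pose proof (cont_lin f _ a H (cont_const 0)). intros x Hx e He. destruct (H0 x Hx e He) as [dd [Hdd H2]].
  exists dd; split; auto. intros y Hy Hyx. specialize (H2 y Hy Hyx). rewrite !Rplus_0_r in H2. auto. Qed.

Lemma cont_sub f g : cont_on K f -> cont_on K g -> cont_on K (fun y => f y - g y).
Proof. intros. pose proof (cont_lin g f (-1) H0 H). intros x Hx e He. destruct (H1 x Hx e He) as [dd [Hdd H2]].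
  exists dd; split; auto. intros y Hy Hyx. specialize (H2 y Hy Hyx).
  replace (f y - g y - (f x - g x)) with (-1 * g y + f y - (-1 * g x + f x)) by ring. auto. Qed.

Lemma cont_mult f g : cont_on K f -> cont_on K g -> cont_on K (fun y => f y * g y).
Proof.
  intros Hf Hg x Hx e He.
  set (A := Rabs (f x) + Rabs (g x) + 1).
  assert (HA : 0 < A) by (unfold A; pose proof (Rabs_pos (f x)); pose proof (Rabs_pos (g x)); lra).
  set (e' := Rmin 1 (e / (4 * A))).
  assert (He' : 0 < e') by (unfold e'; apply Rmin_glb_lt; [lra|apply Rdiv_lt_0_compat; lra]).
  assert (He'1 : e' <= 1) by apply Rmin_l.
  assert (He'2 : e' <= e / (4 * A)) by apply Rmin_r.
  destruct (Hf x Hx e' He') as [d1 [Hd1 H1]]. destruct (Hg x Hx e' He') as [d2 [Hd2 H2]].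
  exists (Rmin d1 d2); split; [apply Rmin_glb_lt; auto|].
  intros y Hy Hyx.
  specialize (H1 y Hy (Rlt_le_trans _ _ _ Hyx (Rmin_l _ _))).
  specialize (H2 y Hy (Rlt_le_trans _ _ _ Hyx (Rmin_r _ _))).
  replace (f y * g y - f x * g x) with ((f y - f x) * (g y - g x) + f x * (g y - g x) + g x * (f y - f x)) by ring.
  eapply Rle_lt_trans; [apply Rabs_triang|]. eapply Rle_lt_trans; [apply Rplus_le_compat_r, Rabs_triang|].
  rewrite !Rabs_mult.
  pose proof (Rabs_pos (f y - f x)). pose proof (Rabs_pos (g y - g x)).
  pose proof (Rabs_pos (f x)). pose proof (Rabs_pos (g x)).
  assert (Rabs (f y - f x) * Rabs (g y - g x) <= e' * 1) by (apply Rmult_le_compat; lra).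
  assert (Rabs (f x) * Rabs (g y - g x) <= A * e') by (apply Rmult_le_compat; unfold A; lra).
  assert (Rabs (g x) * Rabs (f y - f x) <= A * e') by (apply Rmult_le_compat; unfold A; lra).
  assert (A * e' <= e / 4).
  { apply Rle_trans with (A * (e / (4 * A))); [apply Rmult_le_compat_l; lra|]. right; field; lra. }
  assert (e' <= e / 4).
  { apply Rle_trans with (e / (4 * A)); auto. apply Rmult_le_compat_l; [lra|]. apply Rinv_le_contravar; unfold A in *; lra. }
  lra.
Qed.

Lemma cont_ip (g : Vec d -> Vec d) e : vcont_on K g -> cont_on K (fun y => ip (g y) e).
Proof.
  intros Hg x Hx ep Hep.
  destruct (Hg x Hx (ep / (vnorm e + 1))) as [dd [Hdd H]].
  { apply Rdiv_lt_0_compat; [lra|]. pose proof (vnorm_pos e); lra. }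
  exists dd; split; auto. intros y Hy Hyx. specialize (H y Hy Hyx).
  rewrite <- ip_sub. eapply Rle_lt_trans; [apply abs_ip|].
  pose proof (vnorm_pos e). pose proof (vnorm_pos (vsub (g y) (g x))).
  apply Rle_lt_trans with ((ep / (vnorm e + 1)) * vnorm e).
  - apply Rmult_le_compat_r; lra.
  - apply Rlt_le_trans with ((ep / (vnorm e + 1)) * (vnorm e + 1)).
    + apply Rmult_lt_compat_l; [apply Rdiv_lt_0_compat|]; lra.
    + right; field; lra.
Qed.

Lemma cont_coord (g : Vec d -> Vec d) i : vcont_on K g -> cont_on K (fun y => g y i).
Proof.
  intros Hg x Hx ep Hep. destruct (Hg x Hx ep Hep) as [dd [Hdd H]]. exists dd; split; auto.
  intros y Hy Hyx. specialize (H y Hy Hyx). eapply Rle_lt_trans; [|exact H].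
  apply (coord_le (vsub (g y) (g x)) i).
Qed.

Lemma cont_psi (psi : Vec d -> R) (c : Vec d) (g : Vec d -> Vec d) :
  (forall x eps, 0 < eps -> exists delta, 0 < delta /\ forall y, vnorm (vsub y x) < delta -> Rabs (psi y - psi x) < eps) ->
  vcont_on K g -> cont_on K (fun y => psi (vsub c (g y))).
Proof.
  intros Hpsi Hg x Hx ep Hep. destruct (Hpsi (vsub c (g x)) ep Hep) as [d1 [Hd1 H1]].
  destruct (Hg x Hx d1 Hd1) as [d2 [Hd2 H2]]. exists d2; split; auto.
  intros y Hy Hyx. apply H1. specialize (H2 y Hy Hyx). rewrite vnorm_sym.
  erewrite vnorm_ext; [exact H2|]. intro; unfold vsub; ring.
Qed.

Lemma I_lin f g a : cont_on K f -> cont_on K g -> I (fun y => a * f y + g y) = a * I f + I g.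
Proof. destruct HI as [H _]. apply H. Qed.

Lemma I_ext f g : cont_on K f -> (forall y, K y -> f y = g y) -> I f = I g.
Proof. destruct HI as [_ [_ [H _]]]. apply H. Qed.

Lemma I_one : I (fun _ => 1) = 1.
Proof. destruct HI as [_ [_ [_ H]]]. apply H. Qed.

Lemma I_pos f : cont_on K f -> (forall y, K y -> 0 <= f y) -> 0 <= I f.
Proof. destruct HI as [_ [H _]]. apply H. Qed.

Lemma I_zero : I (fun _ => 0) = 0.
Proof.
  pose proof (I_lin (fun _ => 0) (fun _ => 0) 1 (cont_const 0) (cont_const 0)). cbv beta in H.
  rewrite (I_ext (fun y => 1 * 0 + 0) (fun _ => 0)) in H; [lra| |intros; ring].
  apply (cont_lin _ _ 1); apply cont_const.
Qed.

Lemma I_scal f a : cont_on K f -> I (fun y => a * f y) = a * I f.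
Proof.
  intro Hf. pose proof (I_lin f (fun _ => 0) a Hf (cont_const 0)). cbv beta in H. rewrite I_zero in H.
  rewrite (I_ext (fun y => a * f y + 0) (fun y => a * f y)) in H; [lra| |intros; ring].
  apply cont_lin; auto; apply cont_const.
Qed.

Lemma I_plus f g : cont_on K f -> cont_on K g -> I (fun y => f y + g y) = I f + I g.
Proof.
  intros Hf Hg. pose proof (I_lin f g 1 Hf Hg). cbv beta in H.
  rewrite (I_ext (fun y => 1 * f y + g y) (fun y => f y + g y)) in H; [lra| |intros; ring].
  apply cont_lin; auto.
Qed.

Lemma I_sub f g : cont_on K f -> cont_on K g -> I (fun y => f y - g y) = I f - I g.
Proof.
  intros Hf Hg. pose proof (I_lin g f (-1) Hg Hf). cbv beta in H.
  rewrite (I_ext (fun y => -1 * g y + f y) (fun y => f y - g y)) in H; [lra| |intros; ring].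
  apply cont_lin; auto.
Qed.

Lemma I_const c : I (fun _ => c) = c.
Proof.
  pose proof (I_scal (fun _ => 1) c (cont_const 1)). cbv beta in H. rewrite I_one in H.
  rewrite (I_ext (fun _ => c * 1) (fun _ => c)) in H; [lra| apply cont_const|intros; ring].
Qed.

Lemma I_affine f a b : cont_on K f -> I (fun y => a * f y + b) = a * I f + b.
Proof. intro Hf. pose proof (I_lin f (fun _ => b) a Hf (cont_const b)). cbv beta in H. rewrite I_const in H. exact H. Qed.

Lemma I_mono f g : cont_on K f -> cont_on K g -> (forall y, K y -> f y <= g y) -> I f <= I g.
Proof.
  intros Hf Hg H. pose proof (I_pos (fun y => g y - f y) (cont_sub g f Hg Hf) ltac:(intros y Hy; specialize (H y Hy); lra)).
  rewrite I_sub in H0; auto. lra.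
Qed.

Lemma cont_sum n (G : Fin.t n -> Vec d -> R) (E : Fin.t n -> R) :
  (forall i, cont_on K (G i)) -> cont_on K (fun y => sum_fin n (fun i => G i y * E i)).
Proof.
  induction n; intros HG; simpl.
  - apply cont_const.
  - apply cont_plus.
    + pose proof (cont_scal (G Fin.F1) (E Fin.F1) (HG _)). intros x Hx e He.
      destruct (H x Hx e He) as [dd [Hdd H2]]. exists dd; split; auto. intros y Hy Hyx.
      specialize (H2 y Hy Hyx). rewrite (Rmult_comm (G _ y)), (Rmult_comm (G _ x)). auto.
    + apply (IHn (fun i => G (Fin.FS i)) (fun i => E (Fin.FS i))). intro; apply HG.
Qed.

Lemma I_sum n (G : Fin.t n -> Vec d -> R) (E : Fin.t n -> R) :
  (forall i, cont_on K (G i)) ->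
  sum_fin n (fun i => I (G i) * E i) = I (fun y => sum_fin n (fun i => G i y * E i)).
Proof.
  induction n; intros HG; simpl.
  - rewrite I_zero; auto.
  - rewrite (IHn (fun i => G (Fin.FS i)) (fun i => E (Fin.FS i))) by (intro; apply HG).
    pose proof (I_lin (G Fin.F1) _ (E Fin.F1) (HG _) (cont_sum n (fun i => G (Fin.FS i)) (fun i => E (Fin.FS i)) (fun i => HG _))). cbv beta in H.
    rewrite (I_ext (fun y => G Fin.F1 y * E Fin.F1 + sum_fin n (fun i => G (Fin.FS i) y * E (Fin.FS i)))
                  (fun y => E Fin.F1 * G Fin.F1 y + sum_fin n (fun i => G (Fin.FS i) y * E (Fin.FS i)))).
    + rewrite H. ring.
    + apply cont_plus; [|apply (cont_sum n (fun i => G (Fin.FS i)) (fun i => E (Fin.FS i))); intro; apply HG].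
      pose proof (cont_scal (G Fin.F1) (E Fin.F1) (HG _)). intros x Hx e He.
      destruct (H0 x Hx e He) as [dd [Hdd H2]]. exists dd; split; auto. intros y Hy Hyx.
      specialize (H2 y Hy Hyx). rewrite (Rmult_comm (G _ y)), (Rmult_comm (G _ x)). auto.
    + intros; ring.
Qed.

Definition Rsupf (f : Vec d -> R) := Rsup (fun r => exists y, K y /\ r = f y).

Lemma Rsup_lub (E : R -> Prop) : (exists x, E x) -> (exists M, forall x, E x -> x <= M) -> is_lub E (Rsup E).
Proof.
  intros Hne [M HM]. unfold Rsup.
  apply epsilon_spec. destruct (completeness E (ex_intro _ M HM) Hne) as [m Hm]. exists m; auto.
Qed.

Lemma weight_avg_le (w f : Vec d -> R) ps c :
  cont_on K w -> cont_on K f -> 0 < ps -> (forall y, K y -> ps <= w y <= 1) ->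
  (forall y, K y -> f y <= c) -> I (fun y => w y * f y) / I w <= c.
Proof.
  intros Hw Hf Hps Hwb Hfc.
  assert (Iw : ps <= I w).
  { rewrite <- (I_const ps). apply I_mono; auto; [apply cont_const|]. intros y Hy; apply Hwb; auto. }
  assert (I (fun y => w y * f y) <= I (fun y => w y * c)).
  { apply I_mono; try (apply cont_mult; auto; apply cont_const). intros y Hy.
    apply Rmult_le_compat_l; [pose proof (Hwb y Hy); lra| auto]. }
  rewrite (I_ext (fun y => w y * c) (fun y => c * w y)) in H; [|apply cont_mult; auto; apply cont_const|intros; ring].
  rewrite I_scal in H; auto.
  apply Rmult_le_reg_r with (I w); [lra|]. unfold Rdiv. rewrite Rmult_assoc, Rinv_l; lra.
Qed.

Lemma contraction (w1 w2 f : Vec d -> R) ps Vb M0 x0 :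
  K x0 -> cont_on K w1 -> cont_on K w2 -> cont_on K f -> 0 < ps ->
  (forall y, K y -> ps <= w1 y <= 1) -> (forall y, K y -> ps <= w2 y <= 1) ->
  (forall y y', K y -> K y' -> f y - f y' <= Vb) -> (forall y, K y -> Rabs (f y) <= M0) ->
  I (fun y => w1 y * f y) / I w1 - I (fun y => w2 y * f y) / I w2 <= (1 - ps) * Vb.
Proof.
  intros Hx0 Hw1 Hw2 Hf Hps Hb1 Hb2 Hosc Hbd.
  set (M := Rsupf f).
  assert (HM : is_lub (fun r => exists y, K y /\ r = f y) M).
  { apply Rsup_lub; [exists (f x0); eauto|]. exists M0. intros r [y [Hy ->]]. apply Rabs_bnd; auto. }
  assert (Hfm : forall y, K y -> f y <= M) by (intros y Hy; apply (proj1 HM); eauto).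
  assert (Hfm2 : forall y, K y -> M - Vb <= f y).
  { intros y Hy. assert (M <= f y + Vb); [|lra]. apply (proj2 HM). intros r [y' [Hy' ->]].
    specialize (Hosc y' y Hy' Hy). lra. }
  set (m := M - Vb).
  assert (Iw1 : ps <= I w1).
  { rewrite <- (I_const ps). apply I_mono; auto; [apply cont_const|]. intros y Hy; apply Hb1; auto. }
  assert (Iw2 : ps <= I w2).
  { rewrite <- (I_const ps). apply I_mono; auto; [apply cont_const|]. intros y Hy; apply Hb2; auto. }
  assert (Iw1' : I w1 <= 1) by (rewrite <- I_one; apply I_mono; auto; [apply cont_const|]; intros y Hy; apply Hb1; auto).
  assert (Iw2' : I w2 <= 1) by (rewrite <- I_one; apply I_mono; auto; [apply cont_const|]; intros y Hy; apply Hb2; auto).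
  assert (Ka : forall w, cont_on K w -> (forall y, K y -> ps <= w y <= 1) -> ps <= I w -> I w <= 1 ->
     ps * (M - I f) <= M - I (fun y => w y * f y) / I w /\ ps * (I f - m) <= I (fun y => w y * f y) / I w - m).
  { intros w Hw Hb Iw Iw'.
    assert (E1 : I (fun y => w y * (M - f y)) = M * I w - I (fun y => w y * f y)).
    { rewrite (I_ext (fun y => w y * (M - f y)) (fun y => M * w y - w y * f y)).
      - rewrite I_sub, I_scal; auto. apply cont_scal; auto. apply cont_mult; auto.
      - apply cont_mult; auto. apply cont_sub; auto; apply cont_const.
      - intros; ring. }
    assert (E2 : I (fun y => w y * (f y - m)) = I (fun y => w y * f y) - m * I w).
    { rewrite (I_ext (fun y => w y * (f y - m)) (fun y => w y * f y - m * w y)).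
      - rewrite I_sub, I_scal; auto. apply cont_mult; auto. apply cont_scal; auto.
      - apply cont_mult; auto. apply cont_sub; auto; apply cont_const.
      - intros; ring. }
    assert (L1 : ps * (M - I f) <= I (fun y => w y * (M - f y))).
    { replace (ps * (M - I f)) with (- ps * I f + ps * M) by ring. rewrite <- (I_affine f (- ps) (ps * M)) by auto.
      apply I_mono.
      - apply cont_lin; auto; apply cont_const.
      - apply cont_mult; auto. apply cont_sub; auto; apply cont_const.
      - intros y Hy. specialize (Hfm y Hy). specialize (Hb y Hy). nra. }
    assert (L2 : ps * (I f - m) <= I (fun y => w y * (f y - m))).
    { replace (ps * (I f - m)) with (ps * I f + - ps * m) by ring. rewrite <- (I_affine f ps (- ps * m)) by auto.
      apply I_mono.
      - apply cont_lin; auto; apply cont_const.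
      - apply cont_mult; auto. apply cont_sub; auto; apply cont_const.
      - intros y Hy. specialize (Hfm2 y Hy). specialize (Hb y Hy). unfold m in *. nra. }
    assert (P1 : 0 <= M - I f).
    { pose proof (I_affine f (-1) M Hf). assert (0 <= I (fun y => -1 * f y + M)); [|lra].
      apply I_pos. apply cont_lin; auto; apply cont_const. intros y Hy; specialize (Hfm y Hy); lra. }
    assert (P2 : 0 <= I f - m).
    { pose proof (I_affine f 1 (- m) Hf). assert (0 <= I (fun y => 1 * f y + - m)); [|lra].
      apply I_pos. apply cont_lin; auto; apply cont_const. intros y Hy; specialize (Hfm2 y Hy); unfold m; lra. }
    rewrite E1 in L1. rewrite E2 in L2.
    set (J := I (fun y => w y * f y)) in *. set (W := I w) in *.
    assert (HW : 0 < W) by lra.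
    assert (R1 : M - J / W = (M * W - J) / W) by (field; lra).
    assert (R2 : J / W - m = (J - m * W) / W) by (field; lra).
    rewrite R1, R2. split.
    - apply Rle_trans with (M * W - J); [lra|]. 
      apply Rmult_le_reg_r with W; [lra|]. unfold Rdiv. rewrite Rmult_assoc, Rinv_l; [|lra].
      assert (0 <= M * W - J) by nra. nra.
    - apply Rle_trans with (J - m * W); [lra|].
      apply Rmult_le_reg_r with W; [lra|]. unfold Rdiv. rewrite Rmult_assoc, Rinv_l; [|lra].
      assert (0 <= J - m * W) by nra. nra. }
  destruct (Ka w1 Hw1 Hb1 Iw1 Iw1') as [A1 _]. destruct (Ka w2 Hw2 Hb2 Iw2 Iw2') as [_ A2].
  unfold m in *. lra.
Qed.

End ILemmas.

Lemma eps_cont (f : R -> R) x :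
  (forall e, 0 < e -> exists d, 0 < d /\ forall y, Rabs (y - x) < d -> Rabs (f y - f x) < e) ->
  continuity_pt f x.
Proof.
  intros H e He. destruct (H e He) as [d [Hd H2]]. exists d; split; auto.
  intros y [_ Hy]. apply H2. exact Hy.
Qed.

Definition clamp (a b s : R) := Rmax a (Rmin s b).

Lemma clamp_in a b s : a <= s <= b -> clamp a b s = s.
Proof. intros. unfold clamp. rewrite Rmin_left by lra. rewrite Rmax_right; lra. Qed.

Lemma clamp_range a b s : a <= b -> a <= clamp a b s <= b.
Proof. intros. unfold clamp. split; [apply Rmax_l|]. apply Rmax_lub; [lra|apply Rmin_r]. Qed.

Lemma Rmax_lip a x y : Rabs (Rmax a x - Rmax a y) <= Rabs (x - y).
Proof. unfold Rmax. pose proof (Rle_abs (x-y)) as H1. pose proof (Rle_abs (-(x-y))) as H2. rewrite Rabs_Ropp in H2.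
  destruct (Rle_dec a x), (Rle_dec a y); apply Rabs_le; split; lra. Qed.

Lemma Rmin_lip b x y : Rabs (Rmin x b - Rmin y b) <= Rabs (x - y).
Proof. unfold Rmin. pose proof (Rle_abs (x-y)) as H1. pose proof (Rle_abs (-(x-y))) as H2. rewrite Rabs_Ropp in H2.
  destruct (Rle_dec x b), (Rle_dec y b); apply Rabs_le; split; lra. Qed.

Lemma clamp_lip a b s t : a <= b -> Rabs (clamp a b s - clamp a b t) <= Rabs (s - t).
Proof. intros _. unfold clamp. eapply Rle_trans; [apply Rmax_lip|apply Rmin_lip]. Qed.

Lemma clamp_cont (u : R -> R) a b : a < b ->
  (forall t, a < t < b -> continuity_pt u t) ->
  (forall e, 0 < e -> exists d, 0 < d /\ forall h, 0 <= h < d -> Rabs (u (a + h) - u a) < e) ->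
  (forall e, 0 < e -> exists d, 0 < d /\ forall h, 0 <= h < d -> Rabs (u (b - h) - u b) < e) ->
  forall t, a <= t <= b -> continuity_pt (fun s => u (clamp a b s)) t.
Proof.
  intros Hab Hi Ha Hb t Ht. apply eps_cont. intros e He.
  rewrite (clamp_in a b t Ht).
  destruct (Req_dec t a) as [->|Hta]; [|destruct (Req_dec t b) as [->|Htb]].
  - destruct (Ha e He) as [d [Hd H]]. exists d; split; auto. intros y Hy.
    pose proof (clamp_range a b y ltac:(lra)). pose proof (clamp_lip a b y a ltac:(lra)).
    rewrite (clamp_in a b a) in H1 by lra.
    replace (clamp a b y) with (a + (clamp a b y - a)) by ring. apply H.
    apply Rabs_bnd in H1. split; [lra|]. lra.
  - destruct (Hb e He) as [d [Hd H]]. exists d; split; auto. intros y Hy.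
    pose proof (clamp_range a b y ltac:(lra)). pose proof (clamp_lip a b y b ltac:(lra)).
    rewrite (clamp_in a b b) in H1 by lra.
    replace (clamp a b y) with (b - (b - clamp a b y)) by ring. apply H.
    apply Rabs_bnd in H1. split; [lra|]. lra.
  - destruct (cont_eps u t (Hi t ltac:(lra)) e He) as [d [Hd H]].
    exists (Rmin d (Rmin (t - a) (b - t))). split.
    { apply Rmin_glb_lt; auto. apply Rmin_glb_lt; lra. }
    intros y Hy. pose proof (Rmin_l d (Rmin (t - a) (b - t))). pose proof (Rmin_r d (Rmin (t - a) (b - t))).
    pose proof (Rmin_l (t - a) (b - t)). pose proof (Rmin_r (t - a) (b - t)).
    apply Rabs_def2 in Hy. rewrite clamp_in by lra. apply H. apply Rabs_def1; lra.
Qed.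

Lemma dini_cont (F : R -> R) a b : a < b ->
  (forall t, a <= t <= b -> continuity_pt F t) ->
  (forall t, a < t < b -> forall e, 0 < e -> exists d, 0 < d /\
      forall h, 0 < h < d -> F (t + h) <= F t + e * h) ->
  F b <= F a.
Proof.
  intros Hab Hc Hr. apply dini; auto.
  - intros t Ht e He. destruct (cont_eps F t (Hc t ltac:(lra)) e He) as [d [Hd H]].
    exists d; split; auto. intros s Hs _. specialize (H s ltac:(rewrite Rabs_left; lra)).
    apply Rabs_def2 in H. lra.
  - intros e He. destruct (cont_eps F a (Hc a ltac:(lra)) e He) as [d [Hd H]].
    exists d; split; auto. intros h Hh. specialize (H (a + h) ltac:(rewrite Rabs_right; lra)).
    apply Rabs_def2 in H. lra.
Qed.

Lemma mvi (u du : R -> R) a b c : a < b ->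
  (forall s, a < s < b -> derivable_pt_lim u s (du s)) ->
  (forall s, a < s < b -> du s <= c) ->
  (forall e, 0 < e -> exists d, 0 < d /\ forall h, 0 <= h < d -> Rabs (u (a + h) - u a) < e) ->
  (forall e, 0 < e -> exists d, 0 < d /\ forall h, 0 <= h < d -> Rabs (u (b - h) - u b) < e) ->
  u b - u a <= c * (b - a).
Proof.
  intros Hab Hd Hdc Ha Hb.
  set (F := fun s => u (clamp a b s) - c * s).
  assert (HF : F b <= F a).
  { apply dini_cont; auto.
    - intros t Ht. unfold F. apply continuity_pt_minus.
      + apply clamp_cont; auto. intros s Hs. eapply der_cont; apply Hd; auto.
      + apply continuity_pt_mult; [apply continuity_pt_const; intros ? ?; auto|apply continuity_pt_id].
    - intros t Ht e He. destruct (der_eps u t (du t) (Hd t Ht) e He) as [d [Hd0 H]].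
      exists (Rmin d (b - t)). split; [apply Rmin_glb_lt; lra|].
      intros h Hh. pose proof (Rmin_l d (b - t)). pose proof (Rmin_r d (b - t)).
      destruct (H h ltac:(lra)) as [Hup _]. unfold F. rewrite !clamp_in by lra.
      specialize (Hdc t Ht). nra. }
  unfold F in HF. rewrite !clamp_in in HF by lra. lra.
Qed.

Lemma cmp (u du : R -> R) a b c : a < b ->
  (forall s, a < s < b -> derivable_pt_lim u s (du s)) ->
  (forall s, a < s < b -> du s <= - u s + c) ->
  (forall e, 0 < e -> exists d, 0 < d /\ forall h, 0 <= h < d -> Rabs (u (a + h) - u a) < e) ->
  (forall e, 0 < e -> exists d, 0 < d /\ forall h, 0 <= h < d -> Rabs (u (b - h) - u b) < e) ->
  u b <= exp (- (b - a)) * u a + (1 - exp (- (b - a))) * c.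
Proof.
  intros Hab Hd Hdc Ha Hb.
  set (F := fun s => (u (clamp a b s) - c) * exp s).
  assert (HF : F b <= F a).
  { apply dini_cont; auto.
    - intros t Ht. unfold F. apply continuity_pt_mult.
      + apply continuity_pt_minus; [|apply continuity_pt_const; intros ? ?; auto].
        apply clamp_cont; auto. intros s Hs. eapply der_cont; apply Hd; auto.
      + apply derivable_continuous_pt, derivable_pt_exp.
    - intros t Ht e He.
      assert (DF : derivable_pt_lim (fun s => (u s - c) * exp s) t (du t * exp t + (u t - c) * exp t)).
      { apply (derivable_pt_lim_mult (fun s => u s - c) exp).
        - replace (du t) with (du t - 0) by ring. apply derivable_pt_lim_minus; [apply Hd; auto|apply derivable_pt_lim_const].
        - apply derivable_pt_lim_exp. }
      destruct (der_eps _ t _ DF e He) as [d [Hd0 H]].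
      exists (Rmin d (b - t)). split; [apply Rmin_glb_lt; lra|].
      intros h Hh. pose proof (Rmin_l d (b - t)). pose proof (Rmin_r d (b - t)).
      destruct (H h ltac:(lra)) as [Hup _]. unfold F. rewrite !clamp_in by lra.
      specialize (Hdc t Ht). pose proof (exp_pos t).
      assert (du t * exp t + (u t - c) * exp t <= 0) by nra. nra. }
  unfold F in HF. rewrite !clamp_in in HF by lra.
  assert (exp b * exp (- (b - a)) = exp a) by (rewrite <- exp_plus; f_equal; ring).
  pose proof (exp_pos b). pose proof (exp_pos (- (b - a))).
  apply Rmult_le_reg_l with (exp b); auto. nra.
Qed.

Lemma vderiv_ip {d} (S : R -> Prop) (f : R -> Vec d) t D e :
  vderiv_within S f t D -> forall ep, 0 < ep -> exists dl, 0 < dl /\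
    forall h, h <> 0 -> Rabs h < dl -> S (t + h) ->
    Rabs ((ip (f (t + h)) e - ip (f t) e) / h - ip D e) < ep.
Proof.
  intros H ep Hep. pose proof (vnorm_pos e).
  destruct (H (ep / (2 * (vnorm e + 1)))) as [dl [Hdl H2]].
  { apply Rdiv_lt_0_compat; lra. }
  exists dl; split; auto. intros h Hh Hhd HS. specialize (H2 h Hh Hhd HS).
  replace ((ip (f (t + h)) e - ip (f t) e) / h - ip D e)
    with (ip (vsub (vscale (/ h) (vsub (f (t + h)) (f t))) D) e).
  2:{ rewrite ip_sub, ip_scale, ip_sub. field; auto. }
  eapply Rle_lt_trans; [apply abs_ip|].
  apply Rle_lt_trans with (ep / (2 * (vnorm e + 1)) * vnorm e).
  - apply Rmult_le_compat_r; auto.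
  - apply Rle_lt_trans with (ep / (2 * (vnorm e + 1)) * (vnorm e + 1)).
    + apply Rmult_le_compat_l; [left; apply Rdiv_lt_0_compat|]; lra.
    + replace (ep / (2 * (vnorm e + 1)) * (vnorm e + 1)) with (ep / 2) by (field; lra). lra.
Qed.

Lemma vderiv_scalar {d} (f : R -> Vec d) t D e :
  vderiv_within (fun _ => True) f t D -> derivable_pt_lim (fun s => ip (f s) e) t (ip D e).
Proof.
  intros H ep Hep. destruct (vderiv_ip _ f t D e H ep Hep) as [dl [Hdl H2]].
  exists (mkposreal dl Hdl). intros h Hh Hhd. apply H2; auto.
Qed.

Lemma vderiv_interior {d} (S : R -> Prop) (f : R -> Vec d) t D r :
  0 < r -> (forall h, Rabs h < r -> S (t + h)) ->
  vderiv_within S f t D -> vderiv_within (fun _ => True) f t D.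
Proof.
  intros Hr HS H e He. destruct (H e He) as [dl [Hdl H2]]. exists (Rmin dl r).
  split; [apply Rmin_glb_lt; auto|]. intros h Hh Hhd _. apply H2; auto.
  - eapply Rlt_le_trans; [exact Hhd| apply Rmin_l].
  - apply HS. eapply Rlt_le_trans; [exact Hhd| apply Rmin_r].
Qed.

Lemma vderiv_cont {d} (S : R -> Prop) (f : R -> Vec d) t D :
  vderiv_within S f t D -> forall e, 0 < e -> exists dl, 0 < dl /\
    forall h, Rabs h < dl -> S (t + h) -> vnorm (vsub (f (t + h)) (f t)) < e.
Proof.
  intros H e He. destruct (H 1 ltac:(lra)) as [dl [Hdl H2]].
  pose proof (vnorm_pos D).
  exists (Rmin dl (e / (2 * (vnorm D + 1)))). split.
  { apply Rmin_glb_lt; auto. apply Rdiv_lt_0_compat; lra. }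
  intros h Hh HS. destruct (Req_dec h 0) as [->|Hh0].
  { rewrite Rplus_0_r, vnorm_self. auto. }
  pose proof (Rmin_l dl (e / (2 * (vnorm D + 1)))). pose proof (Rmin_r dl (e / (2 * (vnorm D + 1)))).
  specialize (H2 h Hh0 ltac:(lra) HS).
  set (Q := vsub (f (t + h)) (f t)) in *.
  assert (E1 : vnorm (vscale (/ h) Q) <= 1 + vnorm D).
  { pose proof (vnorm_tri3 (vscale (/ h) Q) D (fun _ => 0)).
    assert (vnorm (vsub (vscale (/ h) Q) (fun _ => 0)) = vnorm (vscale (/ h) Q)) by (apply vnorm_ext; intro; unfold vsub; ring).
    assert (vnorm (vsub D (fun _ => 0)) = vnorm D) by (apply vnorm_ext; intro; unfold vsub; ring).
    lra. }
  rewrite vnorm_scale in E1. rewrite Rabs_inv in E1.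
  assert (0 < Rabs h) by (apply Rabs_pos_lt; auto).
  assert (vnorm Q <= Rabs h * (1 + vnorm D)).
  { apply Rmult_le_reg_l with (/ Rabs h); [apply Rinv_0_lt_compat; auto|].
    rewrite <- Rmult_assoc, Rinv_l, Rmult_1_l; lra. }
  apply Rle_lt_trans with (Rabs h * (1 + vnorm D)); auto.
  apply Rle_lt_trans with (e / (2 * (vnorm D + 1)) * (1 + vnorm D)).
  - apply Rmult_le_compat_r; lra.
  - replace (e / (2 * (vnorm D + 1)) * (1 + vnorm D)) with (e / 2) by (field; lra). lra.
Qed.

Lemma vmvi {d} (f D : R -> Vec d) a b c : a < b ->
  (forall s, a < s < b -> vderiv_within (fun _ => True) f s (D s)) ->
  (forall s, a < s < b -> vnorm (D s) <= c) ->
  (forall e, 0 < e -> exists dl, 0 < dl /\ forall h, 0 <= h < dl -> vnorm (vsub (f (a + h)) (f a)) < e) ->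
  (forall e, 0 < e -> exists dl, 0 < dl /\ forall h, 0 <= h < dl -> vnorm (vsub (f (b - h)) (f b)) < e) ->
  vnorm (vsub (f b) (f a)) <= c * (b - a).
Proof.
  intros Hab Hd Hdc Ha Hb.
  assert (Hc : 0 <= c) by (pose proof (Hdc ((a+b)/2) ltac:(lra)); pose proof (vnorm_pos (D ((a+b)/2))); lra).
  apply vnorm_le_dir; [nra|]. intros e He.
  rewrite ip_sub.
  apply (mvi (fun s => ip (f s) e) (fun s => ip (D s) e)); auto.
  - intros s Hs. apply vderiv_scalar; auto.
  - intros s Hs. eapply Rle_trans; [apply ip_le_norm; auto| apply Hdc; auto].
  - intros ep Hep. destruct (Ha ep Hep) as [dl [Hdl H]]. exists dl; split; auto. intros h Hh.
    rewrite <- ip_sub. eapply Rle_lt_trans; [apply abs_ip|]. rewrite He, Rmult_1_r. auto.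
  - intros ep Hep. destruct (Hb ep Hep) as [dl [Hdl H]]. exists dl; split; auto. intros h Hh.
    rewrite <- ip_sub. eapply Rle_lt_trans; [apply abs_ip|]. rewrite He, Rmult_1_r. auto.
Qed.

Lemma inv_small (dl : R) : 0 < dl -> exists N, forall n, (N <= n)%nat -> / (INR n + 1) < dl.
Proof.
  intros Hd. destruct (archimed_cor1 dl Hd) as [N [HN HN0]]. exists N. intros n Hn.
  eapply Rle_lt_trans; [|exact HN]. apply Rinv_le_contravar; [apply lt_0_INR; lia|].
  apply Rle_trans with (INR n); [apply le_INR; auto|lra].
Qed.

Lemma big_nat (M : R) : exists N, forall n, (N <= n)%nat -> M < INR n.
Proof.
  destruct (archimed M) as [H1 _]. exists (Z.to_nat (up M)). intros n Hn.
  apply Rlt_le_trans with (IZR (up M)); auto.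
  destruct (Z_lt_le_dec (up M) 0).
  - apply Rle_trans with 0; [apply IZR_le; lia| apply pos_INR].
  - rewrite <- (Z2Nat.id (up M)) by lia. rewrite <- INR_IZR_INZ. apply le_INR; lia.
Qed.

Lemma inv_pos_n n : 0 < / (INR n + 1).
Proof. apply Rinv_0_lt_compat. pose proof (pos_INR n); lra. Qed.

Lemma inv_mono_n n m : (n <= m)%nat -> / (INR m + 1) <= / (INR n + 1).
Proof. intro H. apply Rinv_le_contravar; [pose proof (pos_INR n); lra|]. apply le_INR in H. lra. Qed.

Lemma vnorm_sub_le {d} (X Y : Vec d) : vnorm (vsub X Y) <= vnorm X + vnorm Y.
Proof.
  pose proof (vnorm_tri3 X (fun _ => 0) Y).
  assert (vnorm (vsub X (fun _ => 0)) = vnorm X) by (apply vnorm_ext; intro; unfold vsub; ring).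
  assert (vnorm (vsub (fun _ => 0) Y) = vnorm Y) by (rewrite vnorm_sym; apply vnorm_ext; intro; unfold vsub; ring).
  lra.
Qed.

Lemma vnorm_diff_le {d} (X Y : Vec d) : Rabs (vnorm X - vnorm Y) <= vnorm (vsub X Y).
Proof.
  pose proof (vnorm_tri3 X Y (fun _ => 0)). pose proof (vnorm_tri3 Y X (fun _ => 0)).
  assert (vnorm (vsub X (fun _ => 0)) = vnorm X) by (apply vnorm_ext; intro; unfold vsub; ring).
  assert (vnorm (vsub Y (fun _ => 0)) = vnorm Y) by (apply vnorm_ext; intro; unfold vsub; ring).
  rewrite (vnorm_sym Y X) in H0. apply Rabs_le. lra.
Qed.

Lemma vderiv_sub {d} (S : R -> Prop) (f g : R -> Vec d) t D1 D2 :
  vderiv_within S f t D1 -> vderiv_within S g t D2 ->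
  vderiv_within S (fun s => vsub (f s) (g s)) t (vsub D1 D2).
Proof.
  intros Hf Hg e He. destruct (Hf (e/2) ltac:(lra)) as [d1 [Hd1 H1]]. destruct (Hg (e/2) ltac:(lra)) as [d2 [Hd2 H2]].
  exists (Rmin d1 d2); split; [apply Rmin_glb_lt; auto|]. intros h Hh Hhd HS.
  specialize (H1 h Hh (Rlt_le_trans _ _ _ Hhd (Rmin_l _ _)) HS).
  specialize (H2 h Hh (Rlt_le_trans _ _ _ Hhd (Rmin_r _ _)) HS).
  pose proof (vnorm_sub_le (vsub (vscale (/ h) (vsub (f (t + h)) (f t))) D1) (vsub (vscale (/ h) (vsub (g (t + h)) (g t))) D2)).
  erewrite vnorm_ext; [|intro; reflexivity].
  rewrite (vnorm_ext _ (vsub (vsub (vscale (/ h) (vsub (f (t + h)) (f t))) D1) (vsub (vscale (/ h) (vsub (g (t + h)) (g t))) D2))).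
  - lra.
  - intro i. unfold vsub, vscale. ring.
Qed.

Lemma lub_ub (E : R -> Prop) M x : is_lub E M -> E x -> x <= M.
Proof. intros [H _] Hx. apply H; auto. Qed.

Lemma lub_le (E : R -> Prop) M c : is_lub E M -> (forall x, E x -> x <= c) -> M <= c.
Proof. intros [_ H] Hc. apply H. exact Hc. Qed.

Section Sys1.
Variables (d : nat) (tau : R) (Om : Vec d -> Prop) (I : (Vec d -> R) -> R)
  (v : R -> Vec d -> Vec d) (psi : Vec d -> R) (psit : R -> R) (eta : R -> Vec d -> Vec d).
Hypothesis Htau : 0 <= tau.
Hypothesis Hbdd : is_bounded Om.
Hypothesis HI : avg_functional (closure Om) I.
Hypothesis Hjc : jcont_on tau (closure Om) v.

Notation K := (closure Om).

Lemma Om_K x : Om x -> K x.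
Proof. apply closure_incl. Qed.

Lemma K_ne : exists x0, Om x0.
Proof.
  apply NNPP; intro Hn.
  assert (HK : forall x, ~ K x).
  { intros x Hx. destruct (Hx 1 ltac:(lra)) as [y [Hy _]]. apply Hn; eauto. }
  pose proof (I_pos d K I HI (fun _ => -1) (cont_const d K (-1)) (fun y Hy => False_ind _ (HK y Hy))).
  rewrite (I_const d K I HI) in H. lra.
Qed.

Lemma ext_Om (g : Vec d -> R) c : cont_on K g -> (forall x, Om x -> g x <= c) -> forall x, K x -> g x <= c.
Proof.
  intros Hg H x Hx. apply Rle_plus_epsilon. intros e He.
  destruct (Hg x Hx e He) as [dl [Hdl H2]]. destruct (Hx dl Hdl) as [y [Hy Hy2]].
  specialize (H2 y (Om_K y Hy) Hy2). specialize (H y Hy). apply Rabs_def2 in H2. lra.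
Qed.

Lemma v_cont_x t : -tau <= t -> vcont_on K (v t).
Proof.
  intros Ht x Hx e He. destruct (Hjc t x Ht Hx e He) as [dl [Hdl H]].
  exists dl; split; auto. intros y Hy Hyx. apply H; auto. rewrite Rminus_diag, Rabs_R0; auto.
Qed.

Lemma v_cont_t x t : K x -> -tau <= t -> forall e, 0 < e -> exists dl, 0 < dl /\
  forall t', -tau <= t' -> Rabs (t' - t) < dl -> vnorm (vsub (v t' x) (v t x)) < e.
Proof.
  intros Hx Ht e He. destruct (Hjc t x Ht Hx e He) as [dl [Hdl H]].
  exists dl; split; auto. intros t' Ht' Htt. apply H; auto. rewrite vnorm_self; auto.
Qed.

Lemma UCt t0 : -tau <= t0 -> forall e, 0 < e -> exists dl, 0 < dl /\
  forall t, -tau <= t -> Rabs (t - t0) < dl -> forall x, K x -> vnorm (vsub (v t x) (v t0 x)) < e.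
Proof.
  intros Ht0 e He. apply NNPP; intro Hn.
  assert (Hs : forall n : nat, exists p : R * Vec d, -tau <= fst p /\ Rabs (fst p - t0) < / (INR n + 1) /\
              K (snd p) /\ e <= vnorm (vsub (v (fst p) (snd p)) (v t0 (snd p)))).
  { intro n. apply NNPP; intro Hc. apply Hn. exists (/ (INR n + 1)). split; [apply inv_pos_n|].
    intros t Ht Htt x Hx. apply Rnot_le_lt. intro Hle. apply Hc. exists (t, x). simpl. auto. }
  set (p := fun n => proj1_sig (constructive_indefinite_description _ (Hs n))).
  assert (Hp : forall n, -tau <= fst (p n) /\ Rabs (fst (p n) - t0) < / (INR n + 1) /\
              K (snd (p n)) /\ e <= vnorm (vsub (v (fst (p n)) (snd (p n))) (v t0 (snd (p n))))).
  { intro n. unfold p. destruct (constructive_indefinite_description _ (Hs n)); auto. }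
  destruct (K_compact Om Hbdd (fun n => snd (p n)) (fun n => proj1 (proj2 (proj2 (Hp n))))) as [phi [Hphi [l [Hl Hconv]]]].
  destruct (Hjc t0 l Ht0 Hl (e/2) ltac:(lra)) as [dl [Hdl Hj]].
  destruct (inv_small dl Hdl) as [N1 HN1]. destruct (Hconv dl Hdl) as [N2 HN2].
  set (n := max N1 N2).
  destruct (Hp (phi n)) as [A1 [A2 [A3 A4]]].
  assert (B1 : vnorm (vsub (v (fst (p (phi n))) (snd (p (phi n)))) (v t0 l)) < e / 2).
  { apply Hj; auto. eapply Rlt_le_trans; [exact A2|]. apply Rle_trans with (/ (INR n + 1)); [apply inv_mono_n; auto|].
    left; apply HN1; lia. apply HN2; lia. }
  assert (B2 : vnorm (vsub (v t0 (snd (p (phi n)))) (v t0 l)) < e / 2).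
  { apply Hj; [lra | exact A3 | rewrite Rminus_diag, Rabs_R0; auto | apply HN2; lia]. }
  pose proof (vnorm_tri3 (v (fst (p (phi n))) (snd (p (phi n)))) (v t0 l) (v t0 (snd (p (phi n))))).
  rewrite (vnorm_sym (v t0 l) (v t0 (snd (p (phi n))))) in H. lra.
Qed.

Lemma vbounded (g : Vec d -> Vec d) : vcont_on K g -> exists M, forall x, K x -> vnorm (g x) <= M.
Proof.
  intros Hg. apply NNPP; intro Hn.
  assert (Hs : forall n : nat, exists x, K x /\ INR n < vnorm (g x)).
  { intro n. apply NNPP; intro Hc. apply Hn. exists (INR n). intros x Hx. apply Rnot_lt_le. intro. apply Hc; eauto. }
  set (p := fun n => proj1_sig (constructive_indefinite_description _ (Hs n))).
  assert (Hp : forall n, K (p n) /\ INR n < vnorm (g (p n))).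
  { intro n. unfold p. destruct (constructive_indefinite_description _ (Hs n)); auto. }
  destruct (K_compact Om Hbdd p (fun n => proj1 (Hp n))) as [phi [Hphi [l [Hl Hconv]]]].
  destruct (Hg l Hl 1 ltac:(lra)) as [dl [Hdl Hc]].
  destruct (Hconv dl Hdl) as [N1 HN1]. destruct (big_nat (vnorm (g l) + 1)) as [N2 HN2].
  set (n := max N1 N2).
  specialize (Hc (p (phi n)) (proj1 (Hp _)) (HN1 n ltac:(lia))).
  pose proof (proj2 (Hp (phi n))). pose proof (HN2 (phi n) ltac:(pose proof (Hphi n); lia)).
  pose proof (vnorm_tri3 (g (p (phi n))) (g l) (fun _ => 0)).
  assert (E1 : vnorm (vsub (g (p (phi n))) (fun _ => 0)) = vnorm (g (p (phi n)))) by (apply vnorm_ext; intro; unfold vsub; ring).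
  assert (E2 : vnorm (vsub (g l) (fun _ => 0)) = vnorm (g l)) by (apply vnorm_ext; intro; unfold vsub; ring).
  lra.
Qed.

Lemma Bnd t : -tau <= t -> exists M, forall x, K x -> vnorm (v t x) <= M.
Proof. intro Ht. apply vbounded, v_cont_x, Ht. Qed.

Lemma UCx y0 : K y0 -> forall e, 0 < e -> exists dl, 0 < dl /\
  forall y, K y -> vnorm (vsub y y0) < dl -> forall q, -tau <= q <= 0 -> vnorm (vsub (v q y) (v q y0)) < e.
Proof.
  intros Hy0 e He. apply NNPP; intro Hn.
  assert (Hs : forall n : nat, exists p : R * Vec d, (-tau <= fst p <= 0) /\ K (snd p) /\
              vnorm (vsub (snd p) y0) < / (INR n + 1) /\ e <= vnorm (vsub (v (fst p) (snd p)) (v (fst p) y0))).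
  { intro n. apply NNPP; intro Hc. apply Hn. exists (/ (INR n + 1)). split; [apply inv_pos_n|].
    intros y Hy Hyy q Hq. apply Rnot_le_lt. intro Hle. apply Hc. exists (q, y). simpl. auto. }
  set (p := fun n => proj1_sig (constructive_indefinite_description _ (Hs n))).
  assert (Hp : forall n, (-tau <= fst (p n) <= 0) /\ K (snd (p n)) /\
              vnorm (vsub (snd (p n)) y0) < / (INR n + 1) /\ e <= vnorm (vsub (v (fst (p n)) (snd (p n))) (v (fst (p n)) y0))).
  { intro n. unfold p. destruct (constructive_indefinite_description _ (Hs n)); auto. }
  destruct (I_compact (-tau) 0 (fun n => fst (p n)) (fun n => proj1 (Hp n))) as [phi [Hphi [q [Hq Hconv]]]].
  destruct (Hjc q y0 ltac:(lra) Hy0 (e/2) ltac:(lra)) as [dl [Hdl Hj]].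
  destruct (inv_small dl Hdl) as [N1 HN1]. destruct (Hconv dl Hdl) as [N2 HN2].
  set (n := max N1 N2).
  destruct (Hp (phi n)) as [A1 [A2 [A3 A4]]].
  assert (B1 : vnorm (vsub (v (fst (p (phi n))) (snd (p (phi n)))) (v q y0)) < e / 2).
  { apply Hj; auto; [lra| apply HN2; lia|]. eapply Rlt_le_trans; [exact A3|].
    apply Rle_trans with (/ (INR n + 1)); [apply inv_mono_n; auto|]. left; apply HN1; lia. }
  assert (B2 : vnorm (vsub (v (fst (p (phi n))) y0) (v q y0)) < e / 2).
  { apply Hj; [lra | exact Hy0 | apply HN2; lia | rewrite vnorm_self; auto]. }
  pose proof (vnorm_tri3 (v (fst (p (phi n))) (snd (p (phi n)))) (v q y0) (v (fst (p (phi n))) y0)).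
  rewrite (vnorm_sym (v q y0) (v (fst (p (phi n))) y0)) in H. lra.
Qed.


Hypothesis HA0 : assumption_A0 psi psit.
Hypothesis HC1 : C1_into_C (closure Om) eta.
Hypothesis Hhist : history_compatible tau (closure Om) eta v.
Hypothesis HL : solves_L tau Om I psi eta v.

Lemma psi_cont : forall x eps, 0 < eps -> exists delta, 0 < delta /\
     forall y, vnorm (vsub y x) < delta -> Rabs (psi y - psi x) < eps.
Proof. apply HA0. Qed.
Lemma psi_rad x : psi x = psit (vnorm x).
Proof. apply HA0. Qed.
Lemma psit_mono r s : 0 <= r -> r <= s -> psit s <= psit r.
Proof. apply HA0. Qed.
Lemma psit_pos r : 0 <= r -> 0 < psit r.
Proof. apply HA0. Qed.
Lemma psit0 : psit 0 = 1.
Proof. apply HA0. Qed.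
Lemma psit_le1 r : 0 <= r -> psit r <= 1.
Proof. intro. rewrite <- psit0. apply psit_mono; lra. Qed.

Lemma eta_cont_pos t : 0 <= t -> vcont_on K (eta t).
Proof. intro Ht. destruct HC1 as [D [H1 _]]. apply H1; auto. Qed.

Lemma eta_time_pos x t : K x -> 0 <= t -> forall e, 0 < e -> exists dl, 0 < dl /\
  forall t', 0 <= t' -> Rabs (t' - t) < dl -> vnorm (vsub (eta t' x) (eta t x)) < e.
Proof.
  intros Hx Ht e He. destruct HC1 as [D [_ [H2 _]]].
  assert (Hd : vderiv_within (fun r => 0 <= r) (fun r => eta r x) t (D t x)).
  { intros ep Hep. destruct (H2 t Ht ep Hep) as [dl [Hdl H]]. exists dl; split; [auto|].
    intros h Hh Hhd HS. apply H; auto. }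
  destruct (vderiv_cont _ _ _ _ Hd e He) as [dl [Hdl H]]. exists dl; split; auto.
  intros t' Ht' Htt. replace t' with (t + (t' - t)) by ring. apply H; auto; replace (t + (t' - t)) with t' by ring; auto.
Qed.

Lemma eta0 x : K x -> eta 0 x = x.
Proof. intro Hx. apply (Hhist x Hx). Qed.

Lemma eta_hist_deriv x s : K x -> -tau <= s <= 0 ->
  vderiv_within (fun r => -tau <= r <= 0) (fun r => eta r x) s (v s x).
Proof. intros Hx Hs. apply (proj2 (Hhist x Hx)); auto. Qed.

Lemma eta_time_hist x s : K x -> -tau <= s <= 0 -> forall e, 0 < e -> exists dl, 0 < dl /\
  forall s', -tau <= s' <= 0 -> Rabs (s' - s) < dl -> vnorm (vsub (eta s' x) (eta s x)) < e.
Proof.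
  intros Hx Hs e He. destruct (vderiv_cont _ _ _ _ (eta_hist_deriv x s Hx Hs) e He) as [dl [Hdl H]].
  exists dl; split; auto. intros s' Hs' Hss. replace s' with (s + (s' - s)) by ring. apply H; auto; replace (s + (s' - s)) with s' by ring; auto.
Qed.

Lemma eta_time x t : K x -> -tau <= t -> forall e, 0 < e -> exists dl, 0 < dl /\
  forall t', -tau <= t' -> Rabs (t' - t) < dl -> vnorm (vsub (eta t' x) (eta t x)) < e.
Proof.
  intros Hx Ht e He.
  destruct (Rlt_le_dec 0 t) as [Hp|Hn].
  - destruct (eta_time_pos x t Hx ltac:(lra) e He) as [dl [Hdl H]]. exists (Rmin dl t).
    split; [apply Rmin_glb_lt; auto|]. intros t' Ht' Htt. pose proof (Rmin_l dl t). pose proof (Rmin_r dl t).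
    apply Rabs_def2 in Htt as Htt'. apply H; lra.
  - destruct (Rlt_le_dec t 0) as [Hn'|Hz].
    + destruct (eta_time_hist x t Hx ltac:(lra) e He) as [dl [Hdl H]]. exists (Rmin dl (- t)).
      split; [apply Rmin_glb_lt; lra|]. intros t' Ht' Htt. pose proof (Rmin_l dl (-t)). pose proof (Rmin_r dl (-t)).
      apply Rabs_def2 in Htt as Htt'. apply H; lra.
    + assert (t = 0) by lra. subst t.
      destruct (eta_time_pos x 0 Hx ltac:(lra) e He) as [d1 [Hd1 H1]].
      destruct (eta_time_hist x 0 Hx ltac:(lra) e He) as [d2 [Hd2 H2]].
      exists (Rmin d1 d2). split; [apply Rmin_glb_lt; auto|]. intros t' Ht' Htt.
      pose proof (Rmin_l d1 d2). pose proof (Rmin_r d1 d2).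
      destruct (Rle_dec 0 t'); [apply H1 | apply H2]; lra.
Qed.

Lemma eta_cont_hist r : -tau <= r <= 0 -> vcont_on K (eta r).
Proof.
  intros Hr y0 Hy0 e He.
  destruct (Req_dec r 0) as [->|Hr0].
  { exists e; split; auto. intros y Hy Hyy. rewrite !eta0; auto. }
  assert (Hrn : r < 0) by (destruct Hr; destruct (Rle_lt_or_eq_dec r 0); auto; contradiction).
  destruct (UCx y0 Hy0 (e / (2 * (tau + 1)))) as [dl [Hdl HU]].
  { apply Rdiv_lt_0_compat; lra. }
  exists (Rmin dl (e / 2)). split; [apply Rmin_glb_lt; lra|].
  intros y Hy Hyy. pose proof (Rmin_l dl (e/2)). pose proof (Rmin_r dl (e/2)).
  set (f := fun q => vsub (eta q y) (eta q y0)).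
  assert (Hm : vnorm (vsub (f 0) (f r)) <= e / (2 * (tau + 1)) * (0 - r)).
  { apply (vmvi f (fun q => vsub (v q y) (v q y0))); try lra.
    - intros s Hs. unfold f. apply vderiv_sub.
      + apply (vderiv_interior (fun r0 => -tau <= r0 <= 0) _ s _ (Rmin (s + tau) (- s))).
        * apply Rmin_glb_lt; lra.
        * intros h Hh. pose proof (Rmin_l (s+tau) (-s)). pose proof (Rmin_r (s+tau) (-s)). apply Rabs_def2 in Hh. lra.
        * apply eta_hist_deriv; auto; lra.
      + apply (vderiv_interior (fun r0 => -tau <= r0 <= 0) _ s _ (Rmin (s + tau) (- s))).
        * apply Rmin_glb_lt; lra.
        * intros h Hh. pose proof (Rmin_l (s+tau) (-s)). pose proof (Rmin_r (s+tau) (-s)). apply Rabs_def2 in Hh. lra.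
        * apply eta_hist_deriv; auto; lra.
    - intros s Hs. left. apply HU; auto; lra.
    - intros ep Hep.
      destruct (eta_time_hist y r Hy ltac:(lra) (ep/2) ltac:(lra)) as [d1 [Hd1 H1]].
      destruct (eta_time_hist y0 r Hy0 ltac:(lra) (ep/2) ltac:(lra)) as [d2 [Hd2 H2]].
      exists (Rmin (Rmin d1 d2) (- r)). split; [repeat apply Rmin_glb_lt; lra|].
      intros h Hh. pose proof (Rmin_l (Rmin d1 d2) (-r)). pose proof (Rmin_r (Rmin d1 d2) (-r)).
      pose proof (Rmin_l d1 d2). pose proof (Rmin_r d1 d2).
      unfold f. rewrite (vnorm_ext _ (vsub (vsub (eta (r + h) y) (eta r y)) (vsub (eta (r + h) y0) (eta r y0)))) by (intro; unfold vsub; ring).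
      eapply Rle_lt_trans; [apply vnorm_sub_le|].
      assert (Rabs (r + h - r) < d1) by (rewrite Rabs_right; lra).
      assert (Rabs (r + h - r) < d2) by (rewrite Rabs_right; lra).
      pose proof (H1 (r + h) ltac:(lra) H7). pose proof (H2 (r + h) ltac:(lra) H8). lra.
    - intros ep Hep.
      destruct (eta_time_hist y 0 Hy ltac:(lra) (ep/2) ltac:(lra)) as [d1 [Hd1 H1]].
      destruct (eta_time_hist y0 0 Hy0 ltac:(lra) (ep/2) ltac:(lra)) as [d2 [Hd2 H2]].
      exists (Rmin (Rmin d1 d2) (- r)). split; [repeat apply Rmin_glb_lt; lra|].
      intros h Hh. pose proof (Rmin_l (Rmin d1 d2) (-r)). pose proof (Rmin_r (Rmin d1 d2) (-r)).
      pose proof (Rmin_l d1 d2). pose proof (Rmin_r d1 d2).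
      unfold f. rewrite (vnorm_ext _ (vsub (vsub (eta (0 - h) y) (eta 0 y)) (vsub (eta (0 - h) y0) (eta 0 y0)))) by (intro; unfold vsub; ring).
      eapply Rle_lt_trans; [apply vnorm_sub_le|].
      assert (Rabs (0 - h - 0) < d1) by (rewrite Rabs_left1; lra).
      assert (Rabs (0 - h - 0) < d2) by (rewrite Rabs_left1; lra).
      pose proof (H1 (0 - h) ltac:(lra) H7). pose proof (H2 (0 - h) ltac:(lra) H8). lra. }
  unfold f in Hm. rewrite !eta0 in Hm; auto.
  rewrite (vnorm_ext (vsub (eta r y) (eta r y0)) (vsub (vsub y y0) (vsub (vsub y y0) (vsub (eta r y) (eta r y0))))) by (intro; unfold vsub; ring).
  eapply Rle_lt_trans; [apply vnorm_sub_le|].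
  assert (e / (2 * (tau + 1)) * (0 - r) <= e / 2).
  { apply Rle_trans with (e / (2 * (tau + 1)) * (tau + 1)).
    - apply Rmult_le_compat_l; [left; apply Rdiv_lt_0_compat|]; lra.
    - right. field. lra. }
  lra.
Qed.

Lemma eta_cont r : -tau <= r -> vcont_on K (eta r).
Proof. intro Hr. destruct (Rle_dec 0 r); [apply eta_cont_pos; auto| apply eta_cont_hist; lra]. Qed.

Variable Bv : R.
Hypothesis HBv : forall s x, -tau <= s <= 0 -> closure Om x -> vnorm (v s x) <= Bv.

Definition wgt s x := fun y => psi (vsub (eta s x) (eta (s - tau) y)).
Definition Aavg s x e := I (fun y => wgt s x y * ip (v (s - tau) y) e) / I (wgt s x).

Lemma wgt_cont s x : 0 < s -> cont_on K (wgt s x).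
Proof. intro Hs. unfold wgt. apply cont_psi; [apply psi_cont | apply eta_cont; lra]. Qed.

Lemma cont_vnorm (g : Vec d -> Vec d) : vcont_on K g -> cont_on K (fun y => vnorm (g y)).
Proof.
  intros Hg x Hx e He. destruct (Hg x Hx e He) as [dl [Hdl H]]. exists dl; split; auto.
  intros y Hy Hyx. eapply Rle_lt_trans; [apply vnorm_diff_le| apply H; auto].
Qed.

Lemma sum_fin_scal n (f : Fin.t n -> R) a : sum_fin n (fun i => a * f i) = a * sum_fin n f.
Proof. rewrite (sum_fin_ext n (fun i => a * f i) (fun i => a * f i + 0 * f i)) by (intro; ring). rewrite sum_fin_lin. ring. Qed.

Lemma deriv_v x s e : Om x -> 0 < s ->
  derivable_pt_lim (fun r => ip (v r x) e) s (Aavg s x e - ip (v s x) e).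
Proof.
  intros Hx Hs. destruct (HL x s Hx Hs) as [_ H2].
  pose proof (vderiv_scalar _ s _ e H2) as D. cbv beta in D.
  match type of D with derivable_pt_lim _ _ ?l => replace (Aavg s x e - ip (v s x) e) with l; [exact D|] end.
  unfold ip at 1.
  set (W := I (fun y => psi (vsub (eta s x) (eta (s - tau) y)))).
  set (G := fun (i : Fin.t d) (y : Vec d) => psi (vsub (eta s x) (eta (s - tau) y)) * v (s - tau) y i).
  rewrite (sum_fin_ext d _ (fun i => (/ W) * (I (G i) * e i) + (-1) * (v s x i * e i))) by (intro; unfold G, Rdiv; ring).
  rewrite sum_fin_lin. rewrite (I_sum d K I HI d G e).
  - unfold Aavg. fold W. unfold wgt. fold W.
    rewrite (I_ext d K I HI (fun y => sum_fin d (fun i => G i y * e i)) (fun y => psi (vsub (eta s x) (eta (s - tau) y)) * ip (v (s - tau) y) e)).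
    + change (ip (v s x) e) with (sum_fin d (fun i => v s x i * e i)). unfold Rdiv. ring.
    + apply cont_sum. intro i. unfold G. apply cont_mult; [apply (wgt_cont s x Hs)|apply cont_coord, v_cont_x; lra].
    + intros y Hy. unfold G, ip. rewrite <- sum_fin_scal. apply sum_fin_ext. intro; ring.
  - intro i. unfold G. apply cont_mult; [apply (wgt_cont s x Hs)|apply cont_coord, v_cont_x; lra].
Qed.

Lemma wgt_bounds s x M : 0 < s -> (forall y, K y -> vnorm (vsub (eta s x) (eta (s - tau) y)) <= M) ->
  forall y, K y -> psit M <= wgt s x y <= 1.
Proof.
  intros Hs HM y Hy. unfold wgt. rewrite psi_rad. split.
  - apply psit_mono; [apply vnorm_pos| apply HM; auto].
  - apply psit_le1, vnorm_pos.
Qed.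

Lemma wgt_exM s x : 0 < s -> exists M, 0 <= M /\ forall y, K y -> vnorm (vsub (eta s x) (eta (s - tau) y)) <= M.
Proof.
  intro Hs. destruct (vbounded (eta (s - tau)) (eta_cont (s - tau) ltac:(lra))) as [M HM].
  exists (vnorm (eta s x) + Rabs M). split; [pose proof (vnorm_pos (eta s x)); pose proof (Rabs_pos M); lra|].
  intros y Hy. eapply Rle_trans; [apply vnorm_sub_le|]. pose proof (HM y Hy). pose proof (Rle_abs M). lra.
Qed.

Definition mm t := Rsup (fun r => exists y, K y /\ r = vnorm (v t y)).

Lemma mm_lub t : -tau <= t -> is_lub (fun r => exists y, K y /\ r = vnorm (v t y)) (mm t).
Proof.
  intro Ht. apply Rsup_lub.
  - destruct K_ne as [x0 Hx0]. exists (vnorm (v t x0)). exists x0; split; auto. apply Om_K; auto.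
  - destruct (Bnd t Ht) as [M HM]. exists M. intros r [y [Hy ->]]. auto.
Qed.

Lemma mm_ub t y : -tau <= t -> K y -> vnorm (v t y) <= mm t.
Proof. intros Ht Hy. apply (lub_ub _ _ _ (mm_lub t Ht)). eauto. Qed.

Lemma mm_le t c : -tau <= t -> (forall y, K y -> vnorm (v t y) <= c) -> mm t <= c.
Proof. intros Ht H. apply (lub_le _ _ _ (mm_lub t Ht)). intros r [y [Hy ->]]. auto. Qed.

Lemma mm_pos t : -tau <= t -> 0 <= mm t.
Proof. intro Ht. destruct K_ne as [x0 Hx0]. apply Rle_trans with (vnorm (v t x0)); [apply vnorm_pos|]. apply mm_ub; auto. apply Om_K; eauto. Qed.

Lemma Aavg_le x s e c : Om x -> 0 < s -> vnorm e = 1 ->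
  (forall y, K y -> ip (v (s - tau) y) e <= c) -> Aavg s x e <= c.
Proof.
  intros Hx Hs He Hc. destruct (wgt_exM s x Hs) as [M [HM0 HM]].
  unfold Aavg. apply (weight_avg_le d K I HI _ _ (psit M)).
  - apply wgt_cont; auto.
  - apply cont_ip, v_cont_x; lra.
  - apply psit_pos; auto.
  - apply wgt_bounds; auto.
  - auto.
Qed.

Lemma v_time_ip x t e : K x -> -tau <= t -> vnorm e = 1 -> forall ep, 0 < ep -> exists dl, 0 < dl /\
  forall t', -tau <= t' -> Rabs (t' - t) < dl -> Rabs (ip (v t' x) e - ip (v t x) e) < ep.
Proof.
  intros Hx Ht He ep Hep. destruct (v_cont_t x t Hx Ht ep Hep) as [dl [Hdl H]]. exists dl; split; auto.
  intros t' Ht' Htt. rewrite <- ip_sub. eapply Rle_lt_trans; [apply abs_ip|]. rewrite He, Rmult_1_r. auto.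
Qed.

Lemma exp_neg_le1 h : 0 <= h -> exp (- h) <= 1.
Proof. intro. rewrite <- exp_0. destruct (Req_dec h 0) as [->|]; [rewrite Ropp_0; lra|]. left; apply exp_increasing; lra. Qed.

Lemma cmp_v x e t h c : Om x -> vnorm e = 1 -> 0 <= t -> 0 < h ->
  (forall s, t < s < t + h -> Aavg s x e <= c) ->
  ip (v (t + h) x) e <= exp (- h) * ip (v t x) e + (1 - exp (- h)) * c.
Proof.
  intros Hx He Ht Hh Hc.
  pose proof (cmp (fun r => ip (v r x) e) (fun r => Aavg r x e - ip (v r x) e) t (t + h) c ltac:(lra)) as C.
  replace (t + h - t) with h in C by ring. apply C.
  - intros s Hs. apply deriv_v; auto; lra.
  - intros s Hs. specialize (Hc s Hs). lra.
  - intros ep Hep. destruct (v_time_ip x t e (Om_K x Hx) ltac:(lra) He ep Hep) as [dl [Hdl H]].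
    exists dl; split; auto. intros h' Hh'. apply H; [lra| rewrite Rabs_right; lra].
  - intros ep Hep. destruct (v_time_ip x (t + h) e (Om_K x Hx) ltac:(lra) He ep Hep) as [dl [Hdl H]].
    exists (Rmin dl h); split; [apply Rmin_glb_lt; lra|]. intros h' Hh'.
    pose proof (Rmin_l dl h). pose proof (Rmin_r dl h).
    apply H; [lra| rewrite Rabs_left1; lra].
Qed.

Lemma F3m t h c : 0 <= t -> 0 < h -> (forall s, t <= s <= t + h -> mm (s - tau) <= c) ->
  mm (t + h) <= exp (- h) * mm t + (1 - exp (- h)) * c.
Proof.
  intros Ht Hh Hc.
  pose proof (exp_pos (- h)). pose proof (exp_neg_le1 h ltac:(lra)).
  assert (Hc0 : 0 <= c) by (pose proof (Hc t ltac:(lra)); pose proof (mm_pos (t - tau) ltac:(lra)); lra).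
  pose proof (mm_pos t ltac:(lra)).
  apply mm_le; [lra|].
  apply (ext_Om (fun y => vnorm (v (t + h) y))); [apply cont_vnorm, v_cont_x; lra|].
  intros x Hx. apply vnorm_le_dir; [nra|]. intros e He.
  eapply Rle_trans; [apply (cmp_v x e t h c Hx He Ht Hh)|].
  - intros s Hs. apply Aavg_le; auto; [lra|]. intros y Hy.
    eapply Rle_trans; [apply ip_le_norm; auto|]. eapply Rle_trans; [apply mm_ub; auto; lra|]. apply Hc; lra.
  - apply Rplus_le_compat_r. apply Rmult_le_compat_l; [lra|].
    eapply Rle_trans; [apply ip_le_norm; auto|]. apply mm_ub; [lra|apply Om_K; auto].
Qed.

Lemma mm_cont t0 : -tau <= t0 -> forall ep, 0 < ep -> exists dl, 0 < dl /\
  forall t, -tau <= t -> Rabs (t - t0) < dl -> Rabs (mm t - mm t0) < ep.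
Proof.
  intros Ht0 ep Hep. destruct (UCt t0 Ht0 (ep/2) ltac:(lra)) as [dl [Hdl H]].
  exists dl; split; auto. intros t Ht Htt.
  assert (A1 : mm t <= mm t0 + ep / 2).
  { apply mm_le; auto. intros y Hy. pose proof (H t Ht Htt y Hy). pose proof (mm_ub t0 y Ht0 Hy).
    pose proof (vnorm_diff_le (v t y) (v t0 y)). apply Rabs_bnd in H2. lra. }
  assert (A2 : mm t0 <= mm t + ep / 2).
  { apply mm_le; auto. intros y Hy. pose proof (H t Ht Htt y Hy). pose proof (mm_ub t y Ht Hy).
    pose proof (vnorm_diff_le (v t y) (v t0 y)). apply Rabs_bnd in H2. lra. }
  apply Rabs_def1; lra.
Qed.

Lemma clampR_cont (g : R -> R) a : (forall t0, a <= t0 -> forall ep, 0 < ep -> exists dl, 0 < dl /\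
  forall t, a <= t -> Rabs (t - t0) < dl -> Rabs (g t - g t0) < ep) ->
  forall t, continuity_pt (fun r => g (Rmax a r)) t.
Proof.
  intros H t. apply eps_cont. intros ep Hep.
  destruct (H (Rmax a t) (Rmax_l a t) ep Hep) as [dl [Hdl H2]]. exists dl; split; auto.
  intros y Hy. apply H2; [apply Rmax_l|]. eapply Rle_lt_trans; [apply Rmax_lip|]. auto.
Qed.

Definition RVv := RV tau K v.

Lemma RV_lub : is_lub (fun r => exists s x, -tau <= s <= 0 /\ K x /\ r = vnorm (v s x)) RVv.
Proof.
  apply Rsup_lub.
  - destruct K_ne as [x0 Hx0]. exists (vnorm (v 0 x0)). exists 0, x0. split; [lra|]. split; auto. apply Om_K; auto.
  - exists Bv. intros r [s [x [Hs [Hx ->]]]]. apply HBv; auto.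
Qed.

Lemma RV_ub s x : -tau <= s <= 0 -> K x -> vnorm (v s x) <= RVv.
Proof. intros Hs Hx. apply (lub_ub _ _ _ RV_lub). exists s, x; auto. Qed.

Lemma RV_pos : 0 <= RVv.
Proof. destruct K_ne as [x0 Hx0]. apply Rle_trans with (vnorm (v 0 x0)); [apply vnorm_pos|]. apply (RV_ub 0 x0); [lra|apply Om_K; auto]. Qed.

Lemma mm_hist s : -tau <= s <= 0 -> mm s <= RVv.
Proof. intro Hs. apply mm_le; [lra|]. intros y Hy. apply RV_ub; auto. Qed.

Lemma maxp t x : -tau <= t -> K x -> vnorm (v t x) <= RVv.
Proof.
  intros Ht Hx. destruct (Rle_dec t 0) as [Hn|Hp]; [apply RV_ub; auto; lra|].
  eapply Rle_trans; [apply mm_ub; eauto|].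
  apply Rnot_lt_le. intro Hlt.
  set (ep := (mm t - RVv) / 2).
  set (F := fun r => mm (Rmax (-tau) r) - (RVv + ep)).
  assert (FE : forall r, -tau <= r -> F r = mm r - (RVv + ep)) by (intros r Hr; unfold F; rewrite Rmax_right; auto).
  destruct (crossing F t) as [T [HT [HFT HFl]]].
  - intro r. unfold F. apply continuity_pt_minus; [|apply continuity_pt_const; intros ? ?; auto].
    apply (clampR_cont mm (-tau) mm_cont r).
  - rewrite FE by lra. pose proof (mm_hist 0 ltac:(lra)). unfold ep. lra.
  - lra.
  - rewrite FE by lra. unfold ep. lra.
  - rewrite FE in HFT by lra.
    assert (Hc : forall s, 0 <= s <= 0 + T -> mm (s - tau) <= RVv + ep).
    { intros s Hs. destruct (Rle_dec (s - tau) 0) as [Hs0|Hs0].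
      - pose proof (mm_hist (s - tau) ltac:(lra)). unfold ep. lra.
      - destruct (Rlt_le_dec (s - tau) T) as [Hs1|Hs1].
        + pose proof (HFl (s - tau) ltac:(lra)). rewrite FE in H by lra. lra.
        + replace (s - tau) with T by lra. lra. }
    pose proof (F3m 0 T (RVv + ep) ltac:(lra) HT Hc). rewrite Rplus_0_l in H.
    pose proof (HFl 0 ltac:(lra)). rewrite FE in H0 by lra.
    pose proof (exp_pos (- T)).
    assert (exp (- T) * mm 0 < exp (- T) * (RVv + ep)) by (apply Rmult_lt_compat_l; lra). lra.
Qed.

Lemma vcont_sub (f g : Vec d -> Vec d) : vcont_on K f -> vcont_on K g -> vcont_on K (fun y => vsub (f y) (g y)).
Proof.
  intros Hf Hg x Hx e He. destruct (Hf x Hx (e/2) ltac:(lra)) as [d1 [Hd1 H1]]. destruct (Hg x Hx (e/2) ltac:(lra)) as [d2 [Hd2 H2]].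
  exists (Rmin d1 d2); split; [apply Rmin_glb_lt; auto|]. intros y Hy Hyx.
  specialize (H1 y Hy (Rlt_le_trans _ _ _ Hyx (Rmin_l _ _))). specialize (H2 y Hy (Rlt_le_trans _ _ _ Hyx (Rmin_r _ _))).
  rewrite (vnorm_ext _ (vsub (vsub (f y) (f x)) (vsub (g y) (g x)))) by (intro; unfold vsub; ring).
  eapply Rle_lt_trans; [apply vnorm_sub_le|]. lra.
Qed.

Lemma vcont_const (c : Vec d) : vcont_on K (fun _ => c).
Proof. intros x Hx e He. exists 1; split; [lra|]. intros. rewrite vnorm_self; auto. Qed.

Lemma endpts (f : R -> Vec d) a b : a < b ->
  (forall t, a <= t <= b -> forall e, 0 < e -> exists dl, 0 < dl /\
     forall t', a <= t' <= b -> Rabs (t' - t) < dl -> vnorm (vsub (f t') (f t)) < e) ->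
  (forall e, 0 < e -> exists dl, 0 < dl /\ forall h, 0 <= h < dl -> vnorm (vsub (f (a + h)) (f a)) < e) /\
  (forall e, 0 < e -> exists dl, 0 < dl /\ forall h, 0 <= h < dl -> vnorm (vsub (f (b - h)) (f b)) < e).
Proof.
  intros Hab H. split.
  - intros e He. destruct (H a ltac:(lra) e He) as [dl [Hdl H2]]. exists (Rmin dl (b - a)).
    split; [apply Rmin_glb_lt; lra|]. intros h Hh. pose proof (Rmin_l dl (b-a)). pose proof (Rmin_r dl (b-a)).
    apply H2; [lra|rewrite Rabs_right; lra].
  - intros e He. destruct (H b ltac:(lra) e He) as [dl [Hdl H2]]. exists (Rmin dl (b - a)).
    split; [apply Rmin_glb_lt; lra|]. intros h Hh. pose proof (Rmin_l dl (b-a)). pose proof (Rmin_r dl (b-a)).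
    apply H2; [lra|rewrite Rabs_left1; lra].
Qed.

Lemma interior_hist x s : K x -> -tau < s < 0 -> vderiv_within (fun _ => True) (fun r => eta r x) s (v s x).
Proof.
  intros Hx Hs. apply (vderiv_interior (fun r0 => -tau <= r0 <= 0) _ s _ (Rmin (s + tau) (- s))).
  + apply Rmin_glb_lt; lra.
  + intros h Hh. pose proof (Rmin_l (s+tau) (-s)). pose proof (Rmin_r (s+tau) (-s)). apply Rabs_def2 in Hh. lra.
  + apply eta_hist_deriv; auto; lra.
Qed.

Lemma eta_time_in x a b : K x -> -tau <= a -> forall t, a <= t <= b -> forall e, 0 < e -> exists dl, 0 < dl /\
     forall t', a <= t' <= b -> Rabs (t' - t) < dl -> vnorm (vsub (eta t' x) (eta t x)) < e.
Proof.
  intros Hx Ha t Ht e He. destruct (eta_time x t Hx ltac:(lra) e He) as [dl [Hdl H]]. exists dl; split; auto.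
  intros t' Ht' Htt. apply H; auto; lra.
Qed.

Lemma pair_time_in x x' a b : K x -> K x' -> -tau <= a -> forall t, a <= t <= b -> forall e, 0 < e -> exists dl, 0 < dl /\
     forall t', a <= t' <= b -> Rabs (t' - t) < dl ->
       vnorm (vsub (vsub (eta t' x) (eta t' x')) (vsub (eta t x) (eta t x'))) < e.
Proof.
  intros Hx Hx' Ha t Ht e He.
  destruct (eta_time x t Hx ltac:(lra) (e/2) ltac:(lra)) as [d1 [Hd1 H1]].
  destruct (eta_time x' t Hx' ltac:(lra) (e/2) ltac:(lra)) as [d2 [Hd2 H2]].
  exists (Rmin d1 d2); split; [apply Rmin_glb_lt; auto|]. intros t' Ht' Htt.
  pose proof (Rmin_l d1 d2). pose proof (Rmin_r d1 d2).
  rewrite (vnorm_ext _ (vsub (vsub (eta t' x) (eta t x)) (vsub (eta t' x') (eta t x')))) by (intro; unfold vsub; ring).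
  eapply Rle_lt_trans; [apply vnorm_sub_le|].
  pose proof (H1 t' ltac:(lra) ltac:(lra)). pose proof (H2 t' ltac:(lra) ltac:(lra)). lra.
Qed.

Lemma seg1 x a b : K x -> -tau <= a -> a <= b ->
  vnorm (vsub (eta b x) (eta a x)) <= RVv * (b - a).
Proof.
  intros Hx Ha Hab.
  assert (Hist : forall a b, -tau <= a -> a < b -> b <= 0 -> vnorm (vsub (eta b x) (eta a x)) <= RVv * (b - a)).
  { clear a b Ha Hab. intros a b Ha Hab Hb.
    destruct (endpts (fun r => eta r x) a b Hab (eta_time_in x a b Hx Ha)) as [E1 E2].
    apply (vmvi (fun r => eta r x) (fun r => v r x)); auto.
    - intros s Hs. apply interior_hist; auto; lra.
    - intros s Hs. apply maxp; auto; lra. }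
  assert (Pos : forall a b, 0 <= a -> a < b -> vnorm (vsub (eta b x) (eta a x)) <= RVv * (b - a)).
  { clear a b Ha Hab. intros a b Ha Hab.
    apply (ext_Om (fun y => vnorm (vsub (eta b y) (eta a y)))); auto.
    - apply cont_vnorm, vcont_sub; apply eta_cont; lra.
    - intros y Hy. destruct (endpts (fun r => eta r y) a b Hab (eta_time_in y a b (Om_K y Hy) ltac:(lra))) as [E1 E2].
      apply (vmvi (fun r => eta r y) (fun r => v r y)); auto.
      + intros s Hs. apply (HL y s Hy); lra.
      + intros s Hs. apply maxp; [lra|apply Om_K; auto]. }
  destruct (Req_dec a b) as [->|Hne]; [rewrite vnorm_self; lra|].
  destruct (Rle_dec 0 a) as [Ha0|Ha0]; [apply Pos; lra|].
  destruct (Rle_dec b 0) as [Hb0|Hb0]; [apply Hist; lra|].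
  pose proof (Hist a 0 Ha ltac:(lra) ltac:(lra)). pose proof (Pos 0 b ltac:(lra) ltac:(lra)).
  pose proof (vnorm_tri3 (eta b x) (eta 0 x) (eta a x)). lra.
Qed.

Lemma dV_lub t : -tau <= t -> is_lub (fun r => exists x y, K x /\ K y /\ r = vnorm (vsub (v t x) (v t y))) (dV K v t).
Proof.
  intro Ht. apply Rsup_lub.
  - destruct K_ne as [x0 Hx0]. exists (vnorm (vsub (v t x0) (v t x0))). exists x0, x0. pose proof (Om_K x0 Hx0). auto.
  - exists (2 * RVv). intros r [x [y [Hx [Hy ->]]]]. eapply Rle_trans; [apply vnorm_sub_le|].
    pose proof (maxp t x Ht Hx). pose proof (maxp t y Ht Hy). lra.
Qed.

Lemma dV_ub t x y : -tau <= t -> K x -> K y -> vnorm (vsub (v t x) (v t y)) <= dV K v t.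
Proof. intros Ht Hx Hy. apply (lub_ub _ _ _ (dV_lub t Ht)). exists x, y; auto. Qed.

Lemma dV_le t c : -tau <= t -> (forall x y, K x -> K y -> vnorm (vsub (v t x) (v t y)) <= c) -> dV K v t <= c.
Proof. intros Ht H. apply (lub_le _ _ _ (dV_lub t Ht)). intros r [x [y [Hx [Hy ->]]]]. auto. Qed.

Lemma dV_pos t : -tau <= t -> 0 <= dV K v t.
Proof. intro Ht. destruct K_ne as [x0 Hx0]. pose proof (Om_K x0 Hx0).
  apply Rle_trans with (vnorm (vsub (v t x0) (v t x0))); [apply vnorm_pos|]. apply dV_ub; auto. Qed.

Lemma dV_2RV t : -tau <= t -> dV K v t <= 2 * RVv.
Proof. intro Ht. apply dV_le; auto. intros x y Hx Hy. eapply Rle_trans; [apply vnorm_sub_le|].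
  pose proof (maxp t x Ht Hx). pose proof (maxp t y Ht Hy). lra. Qed.

Lemma seg2 x x' a b c : K x -> K x' -> -tau <= a -> a <= b -> (forall s, a <= s <= b -> dV K v s <= c) ->
  vnorm (vsub (vsub (eta b x) (eta b x')) (vsub (eta a x) (eta a x'))) <= c * (b - a).
Proof.
  intros Hx Hx' Ha Hab Hc.
  assert (Hist : forall a b, -tau <= a -> a < b -> b <= 0 -> (forall s, a <= s <= b -> dV K v s <= c) ->
     vnorm (vsub (vsub (eta b x) (eta b x')) (vsub (eta a x) (eta a x'))) <= c * (b - a)).
  { clear a b Ha Hab Hc. intros a b Ha Hab Hb Hc.
    destruct (endpts (fun r => vsub (eta r x) (eta r x')) a b Hab (pair_time_in x x' a b Hx Hx' Ha)) as [E1 E2].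
    apply (vmvi (fun r => vsub (eta r x) (eta r x')) (fun r => vsub (v r x) (v r x'))); auto.
    - intros s Hs. apply vderiv_sub; apply interior_hist; auto; lra.
    - intros s Hs. eapply Rle_trans; [apply dV_ub; auto; lra| apply Hc; lra]. }
  assert (Pos : forall a b, 0 <= a -> a < b -> (forall s, a <= s <= b -> dV K v s <= c) ->
     forall x x', K x -> K x' -> vnorm (vsub (vsub (eta b x) (eta b x')) (vsub (eta a x) (eta a x'))) <= c * (b - a)).
  { clear a b Ha Hab Hc Hist. intros a b Ha Hab Hc p p' Hp Hp'.
    assert (Hcont : forall z, K z -> cont_on K (fun y => vnorm (vsub (vsub (eta b y) (eta b z)) (vsub (eta a y) (eta a z))))).
    { intros z Hz. apply cont_vnorm, vcont_sub; apply vcont_sub; try apply vcont_const; apply eta_cont; lra. }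
    assert (Hcont' : forall z, K z -> cont_on K (fun y => vnorm (vsub (vsub (eta b z) (eta b y)) (vsub (eta a z) (eta a y))))).
    { intros z Hz. apply cont_vnorm, vcont_sub; apply vcont_sub; try apply vcont_const; apply eta_cont; lra. }
    apply (ext_Om _ _ (Hcont' p Hp)); auto. intros y' Hy'.
    apply (ext_Om _ _ (Hcont y' (Om_K y' Hy'))); auto. intros y Hy.
    destruct (endpts (fun r => vsub (eta r y) (eta r y')) a b Hab (pair_time_in y y' a b (Om_K y Hy) (Om_K y' Hy') ltac:(lra))) as [E1 E2].
    apply (vmvi (fun r => vsub (eta r y) (eta r y')) (fun r => vsub (v r y) (v r y'))); auto.
    - intros s Hs. apply vderiv_sub; [apply (HL y s Hy) | apply (HL y' s Hy')]; lra.
    - intros s Hs. eapply Rle_trans; [apply dV_ub; [lra|apply Om_K; auto|apply Om_K; auto]| apply Hc; lra]. }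
  destruct (Req_dec a b) as [->|Hne]; [rewrite vnorm_self; lra|].
  destruct (Rle_dec 0 a) as [Ha0|Ha0]; [apply Pos; auto; lra|].
  destruct (Rle_dec b 0) as [Hb0|Hb0]; [apply Hist; auto; lra|].
  pose proof (Hist a 0 Ha ltac:(lra) ltac:(lra) ltac:(intros; apply Hc; lra)).
  pose proof (Pos 0 b ltac:(lra) ltac:(lra) ltac:(intros; apply Hc; lra) x x' Hx Hx').
  pose proof (vnorm_tri3 (vsub (eta b x) (eta b x')) (vsub (eta 0 x) (eta 0 x')) (vsub (eta a x) (eta a x'))). lra.
Qed.

Lemma vnorm_le_tri (A Bq : Vec d) : vnorm A <= vnorm Bq + vnorm (vsub A Bq).
Proof.
  pose proof (vnorm_tri3 A Bq (fun _ => 0)).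
  assert (vnorm (vsub A (fun _ => 0)) = vnorm A) by (apply vnorm_ext; intro; unfold vsub; ring).
  assert (vnorm (vsub Bq (fun _ => 0)) = vnorm Bq) by (apply vnorm_ext; intro; unfold vsub; ring).
  lra.
Qed.

Lemma eta_bnd t : -tau <= t -> exists M, forall x, K x -> vnorm (eta t x) <= M.
Proof.
  intro Ht. destruct (closure_bounded Om Hbdd) as [MK HMK]. exists (MK + RVv * Rabs t).
  intros x Hx. pose proof (vnorm_le_tri (eta t x) (eta 0 x)). rewrite eta0 in H by auto.
  pose proof (HMK x Hx). pose proof RV_pos.
  destruct (Rle_dec 0 t).
  - pose proof (seg1 x 0 t Hx ltac:(lra) r). rewrite eta0 in H2 by auto. rewrite Rabs_right by lra. lra.
  - pose proof (seg1 x t 0 Hx Ht ltac:(lra)). rewrite eta0 in H2 by auto. rewrite vnorm_sym in H2.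
    rewrite Rabs_left by lra. lra.
Qed.

Lemma dX_lub t : -tau <= t -> is_lub (fun r => exists x y, K x /\ K y /\ r = vnorm (vsub (eta t x) (eta t y))) (dX K eta t).
Proof.
  intro Ht. apply Rsup_lub.
  - destruct K_ne as [x0 Hx0]. exists (vnorm (vsub (eta t x0) (eta t x0))). exists x0, x0. pose proof (Om_K x0 Hx0). auto.
  - destruct (eta_bnd t Ht) as [M HM]. exists (2 * M). intros r [x [y [Hx [Hy ->]]]]. eapply Rle_trans; [apply vnorm_sub_le|].
    pose proof (HM x Hx). pose proof (HM y Hy). lra.
Qed.

Lemma dX_ub t x y : -tau <= t -> K x -> K y -> vnorm (vsub (eta t x) (eta t y)) <= dX K eta t.
Proof. intros Ht Hx Hy. apply (lub_ub _ _ _ (dX_lub t Ht)). exists x, y; auto. Qed.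

Lemma dX_le t c : -tau <= t -> (forall x y, K x -> K y -> vnorm (vsub (eta t x) (eta t y)) <= c) -> dX K eta t <= c.
Proof. intros Ht H. apply (lub_le _ _ _ (dX_lub t Ht)). intros r [x [y [Hx [Hy ->]]]]. auto. Qed.

Lemma dX_pos t : -tau <= t -> 0 <= dX K eta t.
Proof. intro Ht. destruct K_ne as [x0 Hx0]. pose proof (Om_K x0 Hx0).
  apply Rle_trans with (vnorm (vsub (eta t x0) (eta t x0))); [apply vnorm_pos|]. apply dX_ub; auto. Qed.

Lemma F2 t h c : -tau <= t -> 0 < h -> (forall s, t <= s <= t + h -> dV K v s <= c) ->
  dX K eta (t + h) <= dX K eta t + h * c.
Proof.
  intros Ht Hh Hc. apply dX_le; [lra|]. intros x y Hx Hy.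
  pose proof (vnorm_le_tri (vsub (eta (t + h) x) (eta (t + h) y)) (vsub (eta t x) (eta t y))).
  pose proof (seg2 x y t (t + h) c Hx Hy Ht ltac:(lra) Hc). pose proof (dX_ub t x y Ht Hx Hy).
  replace (t + h - t) with h in H0 by ring. lra.
Qed.

Lemma cmp_pair x x' e t h c : Om x -> Om x' -> vnorm e = 1 -> 0 <= t -> 0 < h ->
  (forall s, t < s < t + h -> Aavg s x e - Aavg s x' e <= c) ->
  ip (vsub (v (t + h) x) (v (t + h) x')) e <= exp (- h) * ip (vsub (v t x) (v t x')) e + (1 - exp (- h)) * c.
Proof.
  intros Hx Hx' He Ht Hh Hc. rewrite !ip_sub.
  pose proof (cmp (fun r => ip (v r x) e - ip (v r x') e)
     (fun r => (Aavg r x e - ip (v r x) e) - (Aavg r x' e - ip (v r x') e)) t (t + h) c ltac:(lra)) as C.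
  replace (t + h - t) with h in C by ring. apply C.
  - intros s Hs. apply derivable_pt_lim_minus; apply deriv_v; auto; lra.
  - intros s Hs. specialize (Hc s Hs). lra.
  - intros ep Hep. destruct (v_time_ip x t e (Om_K x Hx) ltac:(lra) He (ep/2) ltac:(lra)) as [d1 [Hd1 H1]].
    destruct (v_time_ip x' t e (Om_K x' Hx') ltac:(lra) He (ep/2) ltac:(lra)) as [d2 [Hd2 H2]].
    exists (Rmin d1 d2); split; [apply Rmin_glb_lt; auto|]. intros h' Hh'.
    pose proof (Rmin_l d1 d2). pose proof (Rmin_r d1 d2).
    pose proof (H1 (t + h') ltac:(lra) ltac:(rewrite Rabs_right; lra)).
    pose proof (H2 (t + h') ltac:(lra) ltac:(rewrite Rabs_right; lra)).
    apply Rabs_def2 in H3. apply Rabs_def2 in H4. apply Rabs_def1; lra.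
  - intros ep Hep. destruct (v_time_ip x (t + h) e (Om_K x Hx) ltac:(lra) He (ep/2) ltac:(lra)) as [d1 [Hd1 H1]].
    destruct (v_time_ip x' (t + h) e (Om_K x' Hx') ltac:(lra) He (ep/2) ltac:(lra)) as [d2 [Hd2 H2]].
    exists (Rmin (Rmin d1 d2) h); split; [repeat apply Rmin_glb_lt; auto|]. intros h' Hh'.
    pose proof (Rmin_l (Rmin d1 d2) h). pose proof (Rmin_r (Rmin d1 d2) h).
    pose proof (Rmin_l d1 d2). pose proof (Rmin_r d1 d2).
    pose proof (H1 (t + h - h') ltac:(lra) ltac:(rewrite Rabs_left1; lra)).
    pose proof (H2 (t + h - h') ltac:(lra) ltac:(rewrite Rabs_left1; lra)).
    apply Rabs_def2 in H5. apply Rabs_def2 in H6. apply Rabs_def1; lra.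
Qed.

Lemma Aavg_contr x x' s e : Om x -> Om x' -> 0 < s -> vnorm e = 1 ->
  Aavg s x e - Aavg s x' e <= (1 - psit (dX K eta (s - tau) + RVv * tau)) * dV K v (s - tau).
Proof.
  intros Hx Hx' Hs He.
  set (M := dX K eta (s - tau) + RVv * tau).
  assert (HM0 : 0 <= M) by (unfold M; pose proof (dX_pos (s - tau) ltac:(lra)); pose proof RV_pos; nra).
  assert (Hb : forall z, Om z -> forall y, K y -> psit M <= wgt s z y <= 1).
  { intros z Hz. apply wgt_bounds; auto. intros y Hy.
    rewrite (vnorm_ext _ (vsub (vsub (eta s z) (eta (s - tau) z)) (vsub (eta (s - tau) y) (eta (s - tau) z)))) by (intro; unfold vsub; ring).
    eapply Rle_trans; [apply vnorm_sub_le|].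
    pose proof (seg1 z (s - tau) s (Om_K z Hz) ltac:(lra) ltac:(lra)). replace (s - (s - tau)) with tau in H by ring.
    pose proof (dX_ub (s - tau) y z ltac:(lra) Hy (Om_K z Hz)). unfold M. lra. }
  destruct K_ne as [x0 Hx0].
  unfold Aavg. apply (contraction d K I HI _ _ _ (psit M) (dV K v (s - tau)) RVv x0).
  - apply Om_K; auto.
  - apply wgt_cont; auto.
  - apply wgt_cont; auto.
  - apply cont_ip, v_cont_x; lra.
  - apply psit_pos; auto.
  - apply Hb; auto.
  - apply Hb; auto.
  - intros y y' Hy Hy'. rewrite <- ip_sub. eapply Rle_trans; [apply ip_le_norm; auto|]. apply dV_ub; auto; lra.
  - intros y Hy. eapply Rle_trans; [apply abs_ip|]. rewrite He, Rmult_1_r. apply maxp; auto; lra.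
Qed.

Lemma F3 t h c : 0 <= t -> 0 < h ->
  (forall s, t <= s <= t + h -> (1 - psit (dX K eta (s - tau) + RVv * tau)) * dV K v (s - tau) <= c) ->
  dV K v (t + h) <= exp (- h) * dV K v t + (1 - exp (- h)) * c.
Proof.
  intros Ht Hh Hc.
  pose proof (exp_pos (- h)). pose proof (exp_neg_le1 h ltac:(lra)).
  assert (Hc0 : 0 <= c).
  { pose proof (Hc t ltac:(lra)). pose proof (dV_pos (t - tau) ltac:(lra)).
    assert (psit (dX K eta (t - tau) + RVv * tau) <= 1) by (apply psit_le1; pose proof (dX_pos (t - tau) ltac:(lra)); pose proof RV_pos; nra).
    nra. }
  pose proof (dV_pos t ltac:(lra)).
  apply dV_le; [lra|].
  intros x x' Hx Hx'.
  assert (Hcont : forall z, K z -> cont_on K (fun y => vnorm (vsub (v (t + h) y) (v (t + h) z)))).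
  { intros z Hz. apply cont_vnorm, vcont_sub; [apply v_cont_x; lra| apply vcont_const]. }
  assert (Hcont' : forall z, K z -> cont_on K (fun y => vnorm (vsub (v (t + h) z) (v (t + h) y)))).
  { intros z Hz. apply cont_vnorm, vcont_sub; [apply vcont_const| apply v_cont_x; lra]. }
  apply (ext_Om _ _ (Hcont' x Hx)); auto. intros y' Hy'.
  apply (ext_Om _ _ (Hcont y' (Om_K y' Hy'))); auto. intros y Hy.
  apply vnorm_le_dir; [nra|]. intros e He.
  eapply Rle_trans; [apply (cmp_pair y y' e t h c Hy Hy' He Ht Hh)|].
  - intros s Hs. eapply Rle_trans; [apply Aavg_contr; auto; lra| apply Hc; lra].
  - apply Rplus_le_compat_r. apply Rmult_le_compat_l; [lra|].
    eapply Rle_trans; [apply ip_le_norm; auto|]. apply dV_ub; [lra|apply Om_K; auto|apply Om_K; auto].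
Qed.

Lemma dV_cont t0 : -tau <= t0 -> forall ep, 0 < ep -> exists dl, 0 < dl /\
  forall t, -tau <= t -> Rabs (t - t0) < dl -> Rabs (dV K v t - dV K v t0) < ep.
Proof.
  intros Ht0 ep Hep. destruct (UCt t0 Ht0 (ep/4) ltac:(lra)) as [dl [Hdl H]].
  exists dl; split; auto. intros t Ht Htt.
  assert (A : forall a b x y, -tau <= a -> -tau <= b -> K x -> K y ->
     (forall z, K z -> vnorm (vsub (v a z) (v b z)) < ep / 4) ->
     vnorm (vsub (v a x) (v a y)) <= dV K v b + ep / 2).
  { intros a b x y Ha Hb Hx Hy Hz.
    rewrite (vnorm_ext _ (vsub (vsub (v a x) (v b x)) (vsub (vsub (v a y) (v b y)) (vsub (v b x) (v b y))))) by (intro; unfold vsub; ring).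
    eapply Rle_trans; [apply vnorm_sub_le|]. pose proof (vnorm_sub_le (vsub (v a y) (v b y)) (vsub (v b x) (v b y))).
    pose proof (Hz x Hx). pose proof (Hz y Hy). pose proof (dV_ub b x y Hb Hx Hy). lra. }
  assert (A1 : dV K v t <= dV K v t0 + ep / 2).
  { apply dV_le; [exact Ht|]. intros x y Hx Hy. apply A; auto. }
  assert (A2 : dV K v t0 <= dV K v t + ep / 2).
  { apply dV_le; [exact Ht0|]. intros x y Hx Hy. apply A; auto. intros z Hz. rewrite vnorm_sym. auto. }
  apply Rabs_def1; lra.
Qed.

Lemma dX_cont t0 : -tau <= t0 -> forall ep, 0 < ep -> exists dl, 0 < dl /\
  forall t, -tau <= t -> Rabs (t - t0) < dl -> Rabs (dX K eta t - dX K eta t0) < ep.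
Proof.
  intros Ht0 ep Hep. pose proof RV_pos. exists (ep / (2 * (2 * RVv + 1))). split; [apply Rdiv_lt_0_compat; lra|].
  intros t Ht Htt.
  assert (A : forall a b, -tau <= a -> -tau <= b -> dX K eta a <= dX K eta b + 2 * RVv * Rabs (a - b)).
  { intros a b Ha Hb. apply dX_le; auto. intros x y Hx Hy.
    pose proof (vnorm_le_tri (vsub (eta a x) (eta a y)) (vsub (eta b x) (eta b y))).
    pose proof (dX_ub b x y Hb Hx Hy).
    assert (vnorm (vsub (vsub (eta a x) (eta a y)) (vsub (eta b x) (eta b y))) <= 2 * RVv * Rabs (a - b)).
    { destruct (Rle_dec b a).
      - pose proof (seg2 x y b a (2 * RVv) Hx Hy Hb r ltac:(intros; apply dV_2RV; lra)). rewrite Rabs_right by lra. lra.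
      - pose proof (seg2 x y a b (2 * RVv) Hx Hy Ha ltac:(lra) ltac:(intros; apply dV_2RV; lra)) as Hs2.
        rewrite vnorm_sym in Hs2. rewrite Rabs_left by lra. lra. }
    lra. }
  pose proof (A t t0 Ht Ht0). pose proof (A t0 t Ht0 Ht). rewrite Rabs_minus_sym in H1.
  assert (2 * RVv * Rabs (t - t0) < ep).
  { apply Rle_lt_trans with ((2 * RVv + 1) * Rabs (t - t0)); [pose proof (Rabs_pos (t - t0)); nra|].
    apply Rlt_le_trans with ((2 * RVv + 1) * (ep / (2 * (2 * RVv + 1)))).
    - apply Rmult_lt_compat_l; lra.
    - replace ((2 * RVv + 1) * (ep / (2 * (2 * RVv + 1)))) with (ep / 2) by (field; lra). lra. }
  apply Rabs_def1; lra.
Qed.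

Lemma sum_fin_zero n : sum_fin n (fun _ => 0) = 0.
Proof. induction n; simpl; auto. rewrite IHn. ring. Qed.

Lemma unit_vec (n : nat) : (0 < n)%nat -> exists e : Vec n, vnorm e = 1.
Proof.
  intro Hn. destruct n as [|n]; [lia|].
  exists (fun i => Fin.caseS' i (fun _ => R) 1 (fun _ => 0)).
  unfold vnorm. simpl. rewrite (sum_fin_ext n _ (fun _ => 0)) by (intro; simpl; ring).
  rewrite sum_fin_zero. replace (1 * 1 + 0) with 1 by ring. apply sqrt_1.
Qed.

Lemma psit_cont : (0 < d)%nat -> forall r0, 0 <= r0 -> forall ep, 0 < ep -> exists dl, 0 < dl /\
  forall r, 0 <= r -> Rabs (r - r0) < dl -> Rabs (psit r - psit r0) < ep.
Proof.
  intros Hd r0 Hr0 ep Hep. destruct (unit_vec d Hd) as [e1 He1].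
  assert (Hp : forall r, 0 <= r -> psit r = psi (vscale r e1)).
  { intros r Hr. rewrite psi_rad, vnorm_scale, He1, Rmult_1_r, Rabs_right; [reflexivity|lra]. }
  destruct (psi_cont (vscale r0 e1) ep Hep) as [dl [Hdl H]]. exists dl; split; auto.
  intros r Hr Hrr. rewrite !Hp by auto. apply H.
  rewrite (vnorm_ext _ (vscale (r - r0) e1)) by (intro; unfold vsub, vscale; ring).
  rewrite vnorm_scale, He1, Rmult_1_r. auto.
Qed.

Lemma Rmax_mono a x y : x <= y -> Rmax a x <= Rmax a y.
Proof. intro H. unfold Rmax. destruct (Rle_dec a x), (Rle_dec a y); lra. Qed.

Lemma sys_main : (0 < d)%nat -> flocking_condition tau K psit eta v ->
  (exists M, forall t, 0 <= t -> dX K eta t <= M) /\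
  (exists C, 0 < C /\ forall t, 0 <= t ->
     dV K v t <= Rsup (fun r => exists s, -tau <= s <= 0 /\ r = dV K v s) * exp (- C * t)).
Proof.
  intros Hd Hfl. unfold flocking_condition in Hfl. cbv zeta in Hfl.
  destruct Hfl as [b [Hab [pr1 [pr2 Hlt]]]].
  set (Vc := fun t => dV K v (Rmax (-tau) t)).
  set (Xc := fun t => dX K eta (Rmax (-tau) t)).
  set (psic := fun r => psit (Rmax 0 r)).
  assert (RMe : forall t, -tau <= t -> Rmax (-tau) t = t) by (intros; apply Rmax_right; auto).
  assert (R0e : forall t, 0 <= t -> Rmax 0 t = t) by (intros; apply Rmax_right; auto).
  assert (HVc : forall t, continuity_pt Vc t) by (intro; apply (clampR_cont (dV K v) (-tau) dV_cont)).
  assert (HXc : forall t, continuity_pt Xc t) by (intro; apply (clampR_cont (dX K eta) (-tau) dX_cont)).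
  assert (Hpc : forall t, continuity_pt psic t) by (intro; apply (clampR_cont psit 0 (psit_cont Hd))).
  assert (Hp0 : forall r, 0 < psic r) by (intro; apply psit_pos, Rmax_l).
  assert (Hp1 : forall r, psic r <= 1) by (intro; apply psit_le1, Rmax_l).
  assert (Hpm : forall r s, r <= s -> psic s <= psic r) by (intros; apply psit_mono; [apply Rmax_l| apply Rmax_mono; auto]).
  assert (HV0 : forall t, 0 <= Vc t) by (intro; apply dV_pos, Rmax_l).
  pose proof RV_pos as HRV.
  assert (HXp : forall t, -tau <= t -> 0 <= dX K eta t) by (intros; apply dX_pos; auto).
  assert (HF3 : forall t h c, 0 <= t -> 0 < h ->
     (forall s, t <= s <= t + h -> (1 - psic (Xc (s - tau) + RVv * tau)) * Vc (s - tau) <= c) ->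
     Vc (t + h) <= exp (- h) * Vc t + (1 - exp (- h)) * c).
  { intros t h c Ht Hh Hc. unfold Vc. rewrite !RMe by lra. apply F3; auto.
    intros s Hs. specialize (Hc s Hs). unfold psic, Xc, Vc in Hc. rewrite !RMe in Hc by lra.
    rewrite R0e in Hc; auto. pose proof (HXp (s - tau) ltac:(lra)). nra. }
  assert (HF2 : forall t h c, - tau <= t -> 0 < h -> (forall s, t <= s <= t + h -> Vc s <= c) ->
     Xc (t + h) <= Xc t + h * c).
  { intros t h c Ht Hh Hc. unfold Xc. rewrite !RMe by lra. apply F2; auto.
    intros s Hs. specialize (Hc s Hs). unfold Vc in Hc. rewrite RMe in Hc by lra. auto. }
  assert (Ha0 : 0 <= dX K eta (- tau) + RV tau K v * tau) by (pose proof (HXp (-tau) ltac:(lra)); fold RVv; nra).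
  assert (Hfl : Vc 0 + RInt Vc (-tau) 0 < RInt psic (Xc (-tau) + RVv * tau) b).
  { unfold Vc at 1. rewrite RMe by lra.
    unfold Xc. rewrite RMe by lra.
    rewrite (RInt_ext Vc (dV K v) (-tau) 0).
    2:{ intros x Hx. unfold Vc. rewrite RMe; auto. rewrite Rmin_left in Hx by lra. lra. }
    rewrite (RInt_ext psic psit (dX K eta (- tau) + RVv * tau) b).
    2:{ intros x Hx. unfold psic. rewrite R0e; auto. rewrite Rmin_left in Hx by (fold RVv in Hab; lra). fold RVv in Ha0. lra. }
    rewrite (RInt_Reals (dV K v) (-tau) 0 pr1). fold RVv in pr2. rewrite (RInt_Reals psit _ b pr2). exact Hlt. }
  fold RVv in Hab.
  pose proof (scalar_A tau RVv b Vc Xc psic Htau HRV HVc HXc Hpc Hp0 Hp1 Hpm HV0 HF3 HF2 Hfl) as SA.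
  split.
  - exists b. intros t Ht. pose proof (SA (t + tau) ltac:(lra)). unfold Xc in H.
    replace (t + tau - tau) with t in H by ring. rewrite RMe in H by lra. nra.
  - assert (Hps : 0 < psic b) by auto.
    destruct (scalar_B tau (psic b) Vc Htau Hps (Hp1 b) HVc HV0) as [C [HC HCB]].
    { intros t h c Ht Hh Hc. apply HF3; auto. intros s Hs.
      eapply Rle_trans; [|apply (Hc s Hs)]. apply Rmult_le_compat_r; auto.
      pose proof (SA s ltac:(lra)). pose proof (Hpm _ _ (Rlt_le _ _ H)). lra. }
    exists C; split; auto. intros t Ht.
    set (D := Rsup (fun r => exists s, -tau <= s <= 0 /\ r = dV K v s)).
    assert (HD : is_lub (fun r => exists s, -tau <= s <= 0 /\ r = dV K v s) D).
    { apply Rsup_lub.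
      - exists (dV K v 0). exists 0; split; auto; lra.
      - exists (2 * RVv). intros r [s [Hs ->]]. apply dV_2RV; lra. }
    pose proof (HCB D) as HB1.
    assert (forall s, -tau <= s <= 0 -> Vc s <= D).
    { intros s Hs. unfold Vc. rewrite RMe by lra. apply (lub_ub _ _ _ HD). exists s; auto. }
    specialize (HB1 H t Ht). unfold Vc in HB1. rewrite RMe in HB1 by lra. auto.
Qed.
End Sys1.


Lemma Rsup_zero (E : R -> Prop) : E 0 -> (forall r, E r -> r = 0) -> Rsup E = 0.
Proof.
  intros H0 H. assert (L : is_lub E (Rsup E)).
  { apply Rsup_lub; [exists 0; auto|]. exists 0. intros r Hr. rewrite (H r Hr). lra. }
  apply Rle_antisym.
  - apply (lub_le _ _ _ L). intros r Hr. rewrite (H r Hr). lra.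
  - apply (lub_ub _ _ _ L). auto.
Qed.

Lemma vnorm0 (x : Vec 0) : vnorm x = 0.
Proof. unfold vnorm. simpl. apply sqrt_0. Qed.

Theorem theorem2p2 (d : nat) (tau : R) (Om : Vec d -> Prop)
    (I : (Vec d -> R) -> R) (psi : Vec d -> R) (psit : R -> R)
    (eta v : R -> Vec d -> Vec d) :
  0 <= tau ->
  is_open Om -> is_bounded Om ->
  avg_functional (closure Om) I ->
  assumption_A0 psi psit ->
  C1_into_C (closure Om) eta ->
  jcont_on tau (closure Om) v ->
  history_compatible tau (closure Om) eta v ->
  solves_L tau Om I psi eta v ->
  (* R_V < +oo *)
  (exists B, forall s x, -tau <= s <= 0 -> closure Om x -> vnorm (v s x) <= B) ->
  flocking_condition tau (closure Om) psit eta v ->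
  (* sup_{t >= 0} d_X(t) < +oo *)
  (exists M, forall t, 0 <= t -> dX (closure Om) eta t <= M) /\
  (* d_V(t) <= (max_{s in [-tau,0]} d_V(s)) e^{-Ct} *)
  (exists C, 0 < C /\ forall t, 0 <= t ->
     dV (closure Om) v t <=
       Rsup (fun r => exists s, -tau <= s <= 0 /\ r = dV (closure Om) v s) * exp (- C * t)).
Proof.
  intros Htau Hopen Hbdd HI HA0 HC1 Hjc Hhist HL [B HB] Hfl.
  destruct d as [|d'].
  - destruct (K_ne 0 Om I HI) as [x0 Hx0].
    assert (Kx0 : closure Om x0) by (apply closure_incl; auto).
    assert (DX : forall t, dX (closure Om) eta t = 0).
    { intro t. unfold dX. apply Rsup_zero.
      - exists x0, x0. rewrite vnorm0. auto.
      - intros r [x [y [_ [_ ->]]]]. apply vnorm0. }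
    assert (DV : forall t, dV (closure Om) v t = 0).
    { intro t. unfold dV. apply Rsup_zero.
      - exists x0, x0. rewrite vnorm0. auto.
      - intros r [x [y [_ [_ ->]]]]. apply vnorm0. }
    split.
    + exists 0. intros t _. rewrite DX. lra.
    + exists 1. split; [lra|]. intros t _. rewrite DV.
      rewrite (Rsup_zero (fun r => exists s, -tau <= s <= 0 /\ r = dV (closure Om) v s)).
      * lra.
      * exists 0. split; [lra|]. rewrite DV; auto.
      * intros r [s [_ ->]]. apply DV.
  - apply (sys_main (S d') tau Om I v psi psit eta Htau Hbdd HI Hjc HA0 HC1 Hhist HL B HB); auto. lia.
Qed.
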